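(* Let $\gamma>0$, let $\Lambda(\boldsymbol z,n)$ be a rank-1 lattice and let $\mathcal A(\boldsymbol z,n)=\{\boldsymbol h_\xi:\xi=0,\dots,n-1\}$ be a full-cardinality anti-aliasing set, with $\boldsymbol h_\xi\cdot\boldsymbol z\equiv\xi\pmod n$, chosen with minimal $\ell_2$ norm: $\|\boldsymbol h_\xi\|_2=\min\{\|\boldsymbol h'\|_2:\boldsymbol h'\in\mathbb Z^d,\ \boldsymbol h'\cdot\boldsymbol z\equiv\xi\pmod n\}$ for each $\xi$. Let $v\in E_\alpha(\mathbb T^d)$ (potential) and $g\in E_\beta(\mathbb T^d)$ with $\beta\ge2$. Let $D=\frac\gamma2D_n$ and $W=\frac1\gamma W_n$, where $D_n=\mathrm{diag}\big((4\pi^2\|\boldsymbol h_\xi\|_2^2)_{\xi=0}^{n-1}\big)$ and $W_n=F_nV_nF_n^{-1}$. Then: (i) If $\alpha>5/2$, there is a constant $c_1$, depending only on $d,\alpha,\gamma$ and $v$ (not on $\boldsymbol z$, $n$ or $\boldsymbol y$), such that $\|[D,W]\boldsymbol y\|_2\le c_1\|(D+I)\boldsymbol y\|_2$ for all $\boldsymbol y\in\mathbb R^n$. (ii) If $\alpha>9/2$, there is a constant $c_2$, depending only on $d,\alpha,\gamma$ and $v$ (not on $\boldsymbol z$, $n$ or $\boldsymbol y$), such that $\|[D,[D,W]]\boldsymbol y\|_2\le c_2\|(D+I)^2\boldsymbol y\|_2$ for all $\boldsymbol y\in\mathbb R^n$.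
   Context: Rank-1 lattice: for $\boldsymbol z\in\mathbb Z^d$ with components coprime to $n$, $\Lambda(\boldsymbol z,n)=\{\boldsymbol p_k:=(k\boldsymbol z/n)\bmod1:k=0,\dots,n-1\}$. Its dual $\Lambda^\perp(\boldsymbol z,n)=\{\boldsymbol h\in\mathbb Z^d:\boldsymbol h\cdot\boldsymbol z\equiv0\pmod n\}$; an anti-aliasing set is $\mathcal A\subset\mathbb Z^d$ with differences of distinct elements not in $\Lambda^\perp$; full cardinality means $|\mathcal A|=n$, so it contains exactly one $\boldsymbol h_\xi$ with $\boldsymbol h_\xi\cdot\boldsymbol z\equiv\xi$ for each $\xi\in\mathbb Z_n$. $F_n=\frac1{\sqrt n}(\exp(-2\pi\mathrm i\,k\xi/n))_{\xi,k=0}^{n-1}$ (unitary), $V_n=\mathrm{diag}(v(\boldsymbol p_0),\dots,v(\boldsymbol p_{n-1}))$. $[A,B]=AB-BA$; $\|\cdot\|_2$ the Euclidean norm; $I$ the identity. Korobov space $E_\alpha(\mathbb T^d)=\{f\in L_2(\mathbb T^d):\sum_{\boldsymbol h\in\mathbb Z^d}|\widehat f(\boldsymbol h)|^2\prod_{j=1}^d\max(|h_j|^{2\alpha},1)<\infty\}$, $\widehat f(\boldsymbol h)=\int_{[0,1]^d}f(\boldsymbol x)e^{-2\pi\mathrm i\boldsymbol h\cdot\boldsymbol x}\mathrm d\boldsymbol x$. *)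

(* Defs.v *)
From Stdlib Require Import Reals Lra Lia ZArith List.
Import ListNotations.
Open Scope R_scope.

Definition Cpx : Type := (R * R)%type.
Definition C0 : Cpx := (0, 0).
Definition C1 : Cpx := (1, 0).
Definition RtoC (a : R) : Cpx := (a, 0).
Definition Cadd (u w : Cpx) : Cpx := (fst u + fst w, snd u + snd w).
Definition Csub (u w : Cpx) : Cpx := (fst u - fst w, snd u - snd w).
Definition Cmul (u w : Cpx) : Cpx :=
  (fst u * fst w - snd u * snd w, fst u * snd w + snd u * fst w).
Definition Cmod2 (u : Cpx) : R := fst u * fst u + snd u * snd u.
Definition Cexpi (t : R) : Cpx := (cos t, sin t).

Definition Rsum_list {A} (f : A -> R) (l : list A) : R :=
  fold_right Rplus 0 (map f l).
Definition Csum_list {A} (f : A -> Cpx) (l : list A) : Cpx :=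
  fold_right Cadd C0 (map f l).
Definition Csum (n : nat) (f : nat -> Cpx) : Cpx := Csum_list f (seq 0 n).
Definition Rsum (n : nat) (f : nat -> R) : R := Rsum_list f (seq 0 n).

Definition dotZ (h z : list Z) : Z :=
  fold_right Z.add 0%Z (map (fun p => (fst p * snd p)%Z) (combine h z)).
Definition dotZR (h : list Z) (x : list R) : R :=
  Rsum_list (fun p => IZR (fst p) * snd p) (combine h x).
Definition subZ (h h' : list Z) : list Z :=
  map (fun p => (fst p - snd p)%Z) (combine h h').
Definition normsqZ (h : list Z) : R := Rsum_list (fun a => IZR a * IZR a) h.
Definition norm2Z (h : list Z) : R := sqrt (normsqZ h).

Definition congr (h z : list Z) (n xi : nat) : Prop :=
  Z.modulo (dotZ h z - Z.of_nat xi) (Z.of_nat n) = 0%Z.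
Definition in_dual (h z : list Z) (n : nat) : Prop :=
  Z.modulo (dotZ h z) (Z.of_nat n) = 0%Z.

(* cubes [-N,N]^d of Z^d, used to define sums over Z^d *)
Definition zrange (N : nat) : list Z :=
  map (fun k => (Z.of_nat k - Z.of_nat N)%Z) (seq 0 (2 * N + 1)).
Fixpoint box (d N : nat) : list (list Z) :=
  match d with
  | O => [[]]
  | S d' => flat_map (fun a => map (cons a) (box d' N)) (zrange N)
  end.

Definition kfactor (alpha : R) (a : Z) : R :=
  if Z.eqb a 0 then 1 else Rmax (Rpower (IZR (Z.abs a)) (2 * alpha)) 1.
Definition kweight (alpha : R) (h : list Z) : R :=
  fold_right Rmult 1 (map (kfactor alpha) h).
(* sum_{h in Z^d} |c(h)|^2 prod_j max(|h_j|^{2alpha},1) < infinity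
   (nonnegative terms: bounded partial sums over the cubes) *)
Definition korobov (d : nat) (alpha : R) (c : list Z -> Cpx) : Prop :=
  exists M : R, forall N : nat,
    Rsum_list (fun h => Cmod2 (c h) * kweight alpha h) (box d N) <= M.

(* f(x) = sum_{h in Z^d} c(h) e^{2 pi i h.x}  (limit of cube partial sums) *)
Definition fourier_partial (d : nat) (c : list Z -> Cpx) (x : list R) (N : nat) : Cpx :=
  Csum_list (fun h => Cmul (c h) (Cexpi (2 * PI * dotZR h x))) (box d N).
Definition fourier_series_at (d : nat) (c : list Z -> Cpx) (x : list R) (val : Cpx) : Prop :=
  Un_cv (fun N => fst (fourier_partial d c x N)) (fst val) /\
  Un_cv (fun N => snd (fourier_partial d c x N)) (snd val).

Definition latpt (z : list Z) (n k : nat) : list R :=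
  map (fun zj => IZR (Z.modulo (Z.of_nat k * zj) (Z.of_nat n)) / INR n) z.
Definition coprime_gen (z : list Z) (n : nat) : Prop :=
  Forall (fun zj => Z.gcd zj (Z.of_nat n) = 1%Z) z.

(* ---------- n x n complex matrices (indices 0..n-1) ---------- *)
Definition mat : Type := nat -> nat -> Cpx.
Definition cvec : Type := nat -> Cpx.
Definition mmul (n : nat) (A B : mat) : mat :=
  fun i j => Csum n (fun k => Cmul (A i k) (B k j)).
Definition mvec (n : nat) (A : mat) (y : cvec) : cvec :=
  fun i => Csum n (fun k => Cmul (A i k) (y k)).
Definition madd (A B : mat) : mat := fun i j => Cadd (A i j) (B i j).
Definition msub (A B : mat) : mat := fun i j => Csub (A i j) (B i j).
Definition mscale (a : R) (A : mat) : mat := fun i j => Cmul (RtoC a) (A i j).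
Definition idm : mat := fun i j => if Nat.eqb i j then C1 else C0.
Definition diagm (f : nat -> Cpx) : mat := fun i j => if Nat.eqb i j then f i else C0.
Definition comm (n : nat) (A B : mat) : mat := msub (mmul n A B) (mmul n B A).
Definition vnorm (n : nat) (x : cvec) : R := sqrt (Rsum n (fun i => Cmod2 (x i))).
Definition realvec (y : nat -> R) : cvec := fun i => RtoC (y i).
Definition is_inverse (n : nat) (A B : mat) : Prop :=
  forall i j, (i < n)%nat -> (j < n)%nat ->
    mmul n A B i j = idm i j /\ mmul n B A i j = idm i j.

Definition Fmat (n : nat) : mat :=
  fun xi k => Cmul (RtoC (/ sqrt (INR n)))
                   (Cexpi (- (2 * PI * INR k * INR xi / INR n))).
Definition Vmat (v : list R -> Cpx) (z : list Z) (n : nat) : mat :=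
  diagm (fun k => v (latpt z n k)).
Definition Dnmat (h : nat -> list Z) : mat :=
  diagm (fun xi => RtoC (4 * PI ^ 2 * (norm2Z (h xi)) ^ 2)).

Definition minimal_aa_set (d : nat) (z : list Z) (n : nat) (h : nat -> list Z) : Prop :=
  (forall xi, (xi < n)%nat -> length (h xi) = d /\ congr (h xi) z n xi) /\
  (forall xi xi', (xi < n)%nat -> (xi' < n)%nat -> xi <> xi' ->
     ~ in_dual (subZ (h xi) (h xi')) z n) /\
  (forall xi (h' : list Z), (xi < n)%nat -> length h' = d -> congr h' z n xi ->
     norm2Z (h xi) <= norm2Z h').

(* Main.v *)
Require Import Defs.
From Stdlib Require Import Reals ZArith List Lra Lia.
Import ListNotations.
Open Scope R_scope.


Lemma Cpx_ext (u w : Cpx) : fst u = fst w -> snd u = snd w -> u = w.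
Proof. destruct u, w; simpl; intros; subst; reflexivity. Qed.

Lemma Rsum_list_nil {A} (f : A -> R) : Rsum_list f [] = 0.
Proof. reflexivity. Qed.
Lemma Rsum_list_cons {A} (f : A -> R) a l : Rsum_list f (a :: l) = f a + Rsum_list f l.
Proof. reflexivity. Qed.
Lemma Rsum_list_app {A} (f : A -> R) l1 l2 :
  Rsum_list f (l1 ++ l2) = Rsum_list f l1 + Rsum_list f l2.
Proof. induction l1; simpl; unfold Rsum_list in *; simpl; try rewrite IHl1; lra. Qed.
Lemma Rsum_list_lin {A} (f g : A -> R) a b l :
  Rsum_list (fun x => a * f x + b * g x) l = a * Rsum_list f l + b * Rsum_list g l.
Proof. induction l; unfold Rsum_list in *; simpl; try rewrite IHl; lra. Qed.
Lemma Rsum_list_ext {A} (f g : A -> R) l :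
  (forall x, In x l -> f x = g x) -> Rsum_list f l = Rsum_list g l.
Proof.
  induction l; intros H; unfold Rsum_list in *; simpl; auto.
  rewrite H by (left; auto). f_equal. apply IHl. intros; apply H; right; auto.
Qed.
Lemma Rsum_list_le {A} (f g : A -> R) l :
  (forall x, In x l -> f x <= g x) -> Rsum_list f l <= Rsum_list g l.
Proof.
  induction l; intros H; unfold Rsum_list in *; simpl; try lra.
  apply Rplus_le_compat. apply H; left; auto. apply IHl; intros; apply H; right; auto.
Qed.
Lemma Rsum_list_plus {A} (f g : A -> R) l :
  Rsum_list (fun x => f x + g x) l = Rsum_list f l + Rsum_list g l.
Proof. induction l; unfold Rsum_list in *; simpl; try rewrite IHl; lra. Qed.
Lemma Rsum_list_scal {A} (f : A -> R) c l :
  Rsum_list (fun x => c * f x) l = c * Rsum_list f l.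
Proof. induction l; unfold Rsum_list in *; simpl; try rewrite IHl; lra. Qed.
Lemma Rsum_list_opp {A} (f : A -> R) l :
  Rsum_list (fun x => - f x) l = - Rsum_list f l.
Proof. induction l; unfold Rsum_list in *; simpl; try rewrite IHl; lra. Qed.
Lemma Rsum_list_minus {A} (f g : A -> R) l :
  Rsum_list (fun x => f x - g x) l = Rsum_list f l - Rsum_list g l.
Proof. induction l; unfold Rsum_list in *; simpl; try rewrite IHl; lra. Qed.
Lemma Rsum_list_nonneg {A} (f : A -> R) l :
  (forall x, In x l -> 0 <= f x) -> 0 <= Rsum_list f l.
Proof.
  intros H. replace 0 with (Rsum_list (fun _ : A => 0) l).
  apply Rsum_list_le; auto. induction l; unfold Rsum_list in *; simpl; auto.
  rewrite IHl; auto with real. intros; apply H; right; auto.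
Qed.
Lemma Rsum_list_zero {A} (f : A -> R) l :
  (forall x, In x l -> f x = 0) -> Rsum_list f l = 0.
Proof.
  intros H. transitivity (Rsum_list (fun _ : A => 0 * 0) l).
  apply Rsum_list_ext; intros; rewrite H; auto; ring.
  rewrite Rsum_list_scal; ring.
Qed.
Lemma Rsum_list_map {A B} (f : B -> R) (g : A -> B) l :
  Rsum_list f (map g l) = Rsum_list (fun x => f (g x)) l.
Proof. unfold Rsum_list; rewrite map_map; auto. Qed.
Lemma Rsum_list_flat_map {A B} (f : B -> R) (g : A -> list B) l :
  Rsum_list f (flat_map g l) = Rsum_list (fun x => Rsum_list f (g x)) l.
Proof.
  induction l; simpl; auto. rewrite Rsum_list_app, IHl. reflexivity.
Qed.
Lemma Rsum_list_swap {A B} (f : A -> B -> R) l1 l2 :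
  Rsum_list (fun a => Rsum_list (f a) l2) l1 =
  Rsum_list (fun b => Rsum_list (fun a => f a b) l1) l2.
Proof.
  induction l1; simpl.
  - symmetry; apply Rsum_list_zero; intros; reflexivity.
  - rewrite Rsum_list_cons, IHl1. rewrite <- Rsum_list_plus.
    apply Rsum_list_ext; intros; rewrite Rsum_list_cons; reflexivity.
Qed.
Lemma Rsum_list_abs {A} (f : A -> R) l :
  Rabs (Rsum_list f l) <= Rsum_list (fun x => Rabs (f x)) l.
Proof.
  induction l; unfold Rsum_list in *; simpl. rewrite Rabs_R0; lra.
  eapply Rle_trans. apply Rabs_triang. lra.
Qed.

Lemma Csum_list_fst {A} (f : A -> Cpx) l :
  fst (Csum_list f l) = Rsum_list (fun x => fst (f x)) l.
Proof. induction l; unfold Csum_list, Rsum_list in *; simpl; auto. rewrite IHl; auto. Qed.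
Lemma Csum_list_snd {A} (f : A -> Cpx) l :
  snd (Csum_list f l) = Rsum_list (fun x => snd (f x)) l.
Proof. induction l; unfold Csum_list, Rsum_list in *; simpl; auto. rewrite IHl; auto. Qed.
Lemma Csum_list_ext {A} (f g : A -> Cpx) l :
  (forall x, In x l -> f x = g x) -> Csum_list f l = Csum_list g l.
Proof.
  intros H; apply Cpx_ext; [rewrite !Csum_list_fst | rewrite !Csum_list_snd];
  apply Rsum_list_ext; intros; rewrite H; auto.
Qed.
Lemma Cmul_Csum_l {A} u (f : A -> Cpx) l :
  Cmul u (Csum_list f l) = Csum_list (fun x => Cmul u (f x)) l.
Proof.
  apply Cpx_ext; unfold Cmul; simpl; rewrite !Csum_list_fst, !Csum_list_snd; simpl.
  - rewrite <- !Rsum_list_scal, <- Rsum_list_minus. reflexivity.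
  - rewrite <- !Rsum_list_scal, <- Rsum_list_plus. reflexivity.
Qed.
Lemma Cmul_Csum_r {A} u (f : A -> Cpx) l :
  Cmul (Csum_list f l) u = Csum_list (fun x => Cmul (f x) u) l.
Proof.
  apply Cpx_ext; unfold Cmul; simpl; rewrite !Csum_list_fst, !Csum_list_snd; simpl.
  - rewrite !(Rmult_comm _ (fst u)), !(Rmult_comm _ (snd u)).
    rewrite <- !Rsum_list_scal, <- Rsum_list_minus. apply Rsum_list_ext; intros; ring.
  - rewrite !(Rmult_comm _ (fst u)), !(Rmult_comm _ (snd u)).
    rewrite <- !Rsum_list_scal, <- Rsum_list_plus. apply Rsum_list_ext; intros; ring.
Qed.
Lemma Csum_list_swap {A B} (f : A -> B -> Cpx) l1 l2 :
  Csum_list (fun a => Csum_list (f a) l2) l1 =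
  Csum_list (fun b => Csum_list (fun a => f a b) l1) l2.
Proof.
  apply Cpx_ext; [rewrite !Csum_list_fst | rewrite !Csum_list_snd].
  - transitivity (Rsum_list (fun a => Rsum_list (fun b => fst (f a b)) l2) l1).
    apply Rsum_list_ext; intros; apply Csum_list_fst.
    rewrite Rsum_list_swap. apply Rsum_list_ext; intros; rewrite Csum_list_fst; auto.
  - transitivity (Rsum_list (fun a => Rsum_list (fun b => snd (f a b)) l2) l1).
    apply Rsum_list_ext; intros; apply Csum_list_snd.
    rewrite Rsum_list_swap. apply Rsum_list_ext; intros; rewrite Csum_list_snd; auto.
Qed.

Definition Cabs (u : Cpx) : R := sqrt (Cmod2 u).
Lemma Cmod2_nonneg u : 0 <= Cmod2 u.
Proof. unfold Cmod2; nra. Qed.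
Lemma Cabs_nonneg u : 0 <= Cabs u.
Proof. apply sqrt_pos. Qed.
Lemma Cabs_sq u : Cabs u * Cabs u = Cmod2 u.
Proof. apply sqrt_sqrt, Cmod2_nonneg. Qed.
Lemma Cabs_mul u w : Cabs (Cmul u w) = Cabs u * Cabs w.
Proof.
  unfold Cabs. rewrite <- sqrt_mult by apply Cmod2_nonneg. f_equal.
  unfold Cmod2, Cmul; simpl; ring.
Qed.
Lemma Cabs_add u w : Cabs (Cadd u w) <= Cabs u + Cabs w.
Proof.
  assert (Hc : fst u * fst w + snd u * snd w <= Cabs u * Cabs w).
  { unfold Cabs, Cmod2. pose proof (sqrt_cauchy (fst u) (snd u) (fst w) (snd w)).
    unfold Rsqr in H; exact H. }
  pose proof (Cabs_sq u); pose proof (Cabs_sq w).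
  pose proof (Cabs_nonneg u); pose proof (Cabs_nonneg w).
  unfold Cabs at 1. rewrite <- (sqrt_square (Cabs u + Cabs w)) by lra.
  apply sqrt_le_1_alt. unfold Cmod2, Cadd in *; simpl in *. nra.
Qed.
Lemma Cabs_sub u w : Cabs (Csub u w) <= Cabs u + Cabs w.
Proof.
  replace (Csub u w) with (Cadd u (Cmul (-1, 0) w)).
  - pose proof (Cabs_add u (Cmul (-1,0) w)) as H.
    rewrite Cabs_mul in H. replace (Cabs (-1,0)) with 1 in H. lra.
    unfold Cabs, Cmod2; simpl; replace (-1 * -1 + 0 * 0) with 1 by ring; rewrite sqrt_1; auto.
  - apply Cpx_ext; unfold Csub, Cadd, Cmul; simpl; ring.
Qed.
Lemma Cabs_Csum_list {A} (f : A -> Cpx) l :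
  Cabs (Csum_list f l) <= Rsum_list (fun x => Cabs (f x)) l.
Proof.
  induction l; unfold Csum_list, Rsum_list in *; simpl.
  - unfold Cabs, Cmod2, C0; simpl. replace (0*0+0*0) with 0 by ring; rewrite sqrt_0; lra.
  - eapply Rle_trans. apply Cabs_add. lra.
Qed.
Lemma Cabs_RtoC a : Cabs (RtoC a) = Rabs a.
Proof.
  unfold Cabs, Cmod2, RtoC; simpl. replace (a * a + 0 * 0) with (a ^ 2) by ring.
  rewrite <- sqrt_Rsqr_abs. unfold Rsqr; f_equal; ring.
Qed.
Lemma Cabs_Cexpi t : Cabs (Cexpi t) = 1.
Proof.
  unfold Cabs, Cmod2, Cexpi; simpl. pose proof (sin2_cos2 t). unfold Rsqr in H.
  replace (cos t * cos t + sin t * sin t) with 1 by lra. apply sqrt_1.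
Qed.
Lemma Cabs_le_comp u : Cabs u <= Rabs (fst u) + Rabs (snd u).
Proof.
  unfold Cabs, Cmod2. pose proof (Rabs_pos (fst u)); pose proof (Rabs_pos (snd u)).
  rewrite <- (sqrt_square (Rabs (fst u) + Rabs (snd u))) by lra.
  apply sqrt_le_1_alt.
  assert (Rabs (fst u) * Rabs (fst u) = fst u * fst u) by (rewrite <- Rabs_mult; apply Rabs_pos_eq; nra).
  assert (Rabs (snd u) * Rabs (snd u) = snd u * snd u) by (rewrite <- Rabs_mult; apply Rabs_pos_eq; nra).
  nra.
Qed.

Lemma Rsum_S n f : Rsum (S n) f = Rsum n f + f n.
Proof. unfold Rsum. rewrite seq_S, Rsum_list_app. simpl. unfold Rsum_list; simpl; ring. Qed.
Lemma Rsum_S_l n f : Rsum (S n) f = f 0%nat + Rsum n (fun k => f (S k)).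
Proof. unfold Rsum. change (seq 0 (S n)) with (0%nat :: seq 1 n).
  rewrite Rsum_list_cons, <- seq_shift, Rsum_list_map. reflexivity. Qed.
Lemma Rsum_shift n f : Rsum n (fun k => f (S k)) = Rsum n f + f n - f 0%nat.
Proof. pose proof (Rsum_S n f); pose proof (Rsum_S_l n f). lra. Qed.
Lemma Rsum_ext_lt n f g : (forall k, (k < n)%nat -> f k = g k) -> Rsum n f = Rsum n g.
Proof. intros H; apply Rsum_list_ext; intros x Hx; apply in_seq in Hx; apply H; lia. Qed.
Lemma Rsum_le_lt n f g : (forall k, (k < n)%nat -> f k <= g k) -> Rsum n f <= Rsum n g.
Proof. intros H; apply Rsum_list_le; intros x Hx; apply in_seq in Hx; apply H; lia. Qed.
Lemma Rsum_zero n f : (forall k, (k < n)%nat -> f k = 0) -> Rsum n f = 0.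
Proof. intros H; apply Rsum_list_zero; intros x Hx; apply in_seq in Hx; apply H; lia. Qed.
Lemma Rsum_nonneg n f : (forall k, (k < n)%nat -> 0 <= f k) -> 0 <= Rsum n f.
Proof. intros H; apply Rsum_list_nonneg; intros x Hx; apply in_seq in Hx; apply H; lia. Qed.
Lemma Rsum_delta n f i : (i < n)%nat -> (forall k, (k < n)%nat -> k <> i -> f k = 0) ->
  Rsum n f = f i.
Proof.
  induction n; intros Hi H; [lia|]. rewrite Rsum_S.
  destruct (Nat.eq_dec i n).
  - subst. rewrite Rsum_zero. ring. intros; apply H; lia.
  - rewrite IHn by (try lia; intros; apply H; lia). rewrite (H n) by lia. ring.
Qed.
Lemma Rsum_const n c : Rsum n (fun _ => c) = INR n * c.
Proof. induction n. unfold Rsum; simpl; unfold Rsum_list; simpl; ring.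
  rewrite Rsum_S, IHn, S_INR; ring. Qed.
Lemma Rsum_one_le_max (T : nat -> R) c n :
  (forall k, (k < n)%nat -> T k <= c) -> Rsum n (fun k => T k) <= INR n * c.
Proof. intros H. rewrite <- Rsum_const. apply Rsum_le_lt; auto. Qed.

Lemma Rsum_indicator_le1 n (P : nat -> bool) :
  (forall j j', (j < n)%nat -> (j' < n)%nat -> P j = true -> P j' = true -> j = j') ->
  Rsum n (fun j => if P j then 1 else 0) <= 1.
Proof.
  induction n; intros H.
  - unfold Rsum; simpl; unfold Rsum_list; simpl; lra.
  - rewrite Rsum_S. destruct (P n) eqn:E.
    + rewrite Rsum_zero. lra. intros k Hk. destruct (P k) eqn:E2; auto.
      assert (k = n) by (apply H; auto; lia). lia.
    + assert (Rsum n (fun j => if P j then 1 else 0) <= 1) by (apply IHn; intros; apply H; auto; lia).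
      lra.
Qed.

Lemma Cexpi_add a b : Cmul (Cexpi a) (Cexpi b) = Cexpi (a + b).
Proof. apply Cpx_ext; unfold Cmul, Cexpi; simpl. rewrite cos_plus; ring. rewrite sin_plus; ring. Qed.

Lemma cos_sin_2PIZ q : cos (2 * PI * IZR q) = 1 /\ sin (2 * PI * IZR q) = 0.
Proof.
  destruct (Z_le_gt_dec 0 q).
  - rewrite <- (Z2Nat.id q) by lia. rewrite <- INR_IZR_INZ.
    replace (2 * PI * INR (Z.to_nat q)) with (0 + 2 * INR (Z.to_nat q) * PI) by ring.
    rewrite cos_period, sin_period, cos_0, sin_0. auto.
  - replace q with (- Z.of_nat (Z.to_nat (- q)))%Z by lia.
    rewrite opp_IZR, <- INR_IZR_INZ.
    replace (2 * PI * - INR (Z.to_nat (- q))) with (- (0 + 2 * INR (Z.to_nat (-q)) * PI)) by ring.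
    rewrite cos_neg, sin_neg, cos_period, sin_period, cos_0, sin_0. split; ring.
Qed.
Lemma Cexpi_periodic x q : Cexpi (x + 2 * PI * IZR q) = Cexpi x.
Proof.
  rewrite <- Cexpi_add. destruct (cos_sin_2PIZ q) as [H1 H2].
  apply Cpx_ext; unfold Cmul, Cexpi; simpl; rewrite H1, H2; ring.
Qed.

Lemma cos_eq1_int x : cos (2 * PI * x) = 1 -> exists k : Z, x = IZR k.
Proof.
  intros H. replace (2 * PI * x) with (2 * (PI * x)) in H by ring.
  rewrite cos_2a_sin in H. assert (sin (PI * x) = 0) by nra.
  apply sin_eq_0_0 in H0. destruct H0 as [k Hk]. exists k.
  pose proof PI_RGT_0. apply (Rmult_eq_reg_l PI); [|lra]. rewrite Hk; ring.
Qed.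

Definition Csum_n := Csum.

Lemma Csum_fst n f : fst (Csum n f) = Rsum n (fun k => fst (f k)).
Proof. apply Csum_list_fst. Qed.
Lemma Csum_snd n f : snd (Csum n f) = Rsum n (fun k => snd (f k)).
Proof. apply Csum_list_snd. Qed.

Lemma roots_unity n (r : Z) : (0 < n)%nat ->
  Csum n (fun k => Cexpi (2 * PI * INR k * IZR r / INR n)) =
  if Z.eqb (Z.modulo r (Z.of_nat n)) 0 then RtoC (INR n) else C0.
Proof.
  intros Hn. assert (HnR : 0 < INR n) by (apply lt_0_INR; auto).
  destruct (Z.eqb_spec (r mod Z.of_nat n) 0) as [E|E].
  - apply Z.mod_divide in E; [|lia]. destruct E as [q Hq]. subst r.
    apply Cpx_ext; rewrite ?Csum_fst, ?Csum_snd; unfold RtoC; simpl.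
    + rewrite (Rsum_ext_lt _ _ (fun _ => 1)). rewrite Rsum_const; ring.
      intros k _. rewrite mult_IZR, <- INR_IZR_INZ.
      replace (2 * PI * INR k * (IZR q * INR n) / INR n) with (2 * PI * IZR (Z.of_nat k * q)).
      apply cos_sin_2PIZ. rewrite mult_IZR, <- INR_IZR_INZ. field. lra.
    + apply Rsum_zero. intros k _. rewrite mult_IZR, <- INR_IZR_INZ.
      replace (2 * PI * INR k * (IZR q * INR n) / INR n) with (2 * PI * IZR (Z.of_nat k * q)).
      apply cos_sin_2PIZ. rewrite mult_IZR, <- INR_IZR_INZ. field. lra.
  - set (th := 2 * PI * IZR r / INR n).
    assert (Hc : cos th <> 1).
    { intros Hc. unfold th in Hc. replace (2 * PI * IZR r / INR n) with (2 * PI * (IZR r / INR n)) in Hc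
        by (field; lra).
      apply cos_eq1_int in Hc. destruct Hc as [k Hk]. apply E.
      assert (IZR r = IZR (k * Z.of_nat n)). { rewrite mult_IZR, <- INR_IZR_INZ, <- Hk. field. lra. }
      apply eq_IZR in H. subst r. apply Z.mod_mul. lia. }
    set (S1 := Rsum n (fun k => cos (INR k * th))).
    set (S2 := Rsum n (fun k => sin (INR k * th))).
    assert (Hf : fst (Csum n (fun k => Cexpi (2 * PI * INR k * IZR r / INR n))) = S1).
    { rewrite Csum_fst. apply Rsum_ext_lt; intros; simpl; f_equal; unfold th; field; lra. }
    assert (Hs : snd (Csum n (fun k => Cexpi (2 * PI * INR k * IZR r / INR n))) = S2).
    { rewrite Csum_snd. apply Rsum_ext_lt; intros; simpl; f_equal; unfold th; field; lra. }
    assert (Hnth : cos (INR n * th) = 1 /\ sin (INR n * th) = 0).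
    { replace (INR n * th) with (2 * PI * IZR r) by (unfold th; field; lra). apply cos_sin_2PIZ. }
    assert (E1 : Rsum n (fun k => cos (INR (S k) * th)) = S1).
    { rewrite (Rsum_shift n (fun k => cos (INR k * th))). simpl (INR 0).
      rewrite Rmult_0_l, cos_0, (proj1 Hnth). unfold S1; ring. }
    assert (E2 : Rsum n (fun k => sin (INR (S k) * th)) = S2).
    { rewrite (Rsum_shift n (fun k => sin (INR k * th))). simpl (INR 0).
      rewrite Rmult_0_l, sin_0, (proj2 Hnth). unfold S2; ring. }
    assert (E1' : Rsum n (fun k => cos (INR (S k) * th)) = cos th * S1 - sin th * S2).
    { unfold S1, S2, Rsum. rewrite <- !Rsum_list_scal, <- Rsum_list_minus.
      apply Rsum_list_ext; intros. rewrite S_INR.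
      replace ((INR x + 1) * th) with (th + INR x * th) by ring. rewrite cos_plus; ring. }
    assert (E2' : Rsum n (fun k => sin (INR (S k) * th)) = cos th * S2 + sin th * S1).
    { unfold S1, S2, Rsum. rewrite <- !Rsum_list_scal, <- Rsum_list_plus.
      apply Rsum_list_ext; intros. rewrite S_INR.
      replace ((INR x + 1) * th) with (th + INR x * th) by ring. rewrite sin_plus; ring. }
    pose proof (sin2_cos2 th). unfold Rsqr in H.
    assert (Hpos : 0 < (cos th - 1) * (cos th - 1) + sin th * sin th).
    { assert (cos th - 1 <> 0) by lra. nra. }
    assert (A1 : (cos th - 1) * S1 - sin th * S2 = 0) by lra.
    assert (A2 : (cos th - 1) * S2 + sin th * S1 = 0) by lra.
    assert (S1 = 0).
    { apply (Rmult_eq_reg_l ((cos th - 1) * (cos th - 1) + sin th * sin th)); [|lra].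
      transitivity ((cos th - 1) * ((cos th -1)*S1 - sin th * S2) + sin th * ((cos th - 1)*S2 + sin th*S1)).
      ring. rewrite A1, A2; ring. }
    assert (S2 = 0).
    { apply (Rmult_eq_reg_l ((cos th - 1) * (cos th - 1) + sin th * sin th)); [|lra].
      transitivity ((cos th - 1) * ((cos th -1)*S2 + sin th * S1) - sin th * ((cos th - 1)*S1 - sin th*S2)).
      ring. rewrite A1, A2; ring. }
    apply Cpx_ext; rewrite ?Hf, ?Hs; simpl; auto.
Qed.

Lemma Cmul_assoc a b c : Cmul a (Cmul b c) = Cmul (Cmul a b) c.
Proof. apply Cpx_ext; unfold Cmul; simpl; ring. Qed.
Lemma Cmul_comm a b : Cmul a b = Cmul b a.
Proof. apply Cpx_ext; unfold Cmul; simpl; ring. Qed.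
Lemma Cmul_RtoC a b : Cmul (RtoC a) (RtoC b) = RtoC (a * b).
Proof. apply Cpx_ext; unfold Cmul, RtoC; simpl; ring. Qed.

Lemma Csum_delta n (f : nat -> Cpx) i : (i < n)%nat ->
  (forall k, (k < n)%nat -> k <> i -> fst (f k) = 0 /\ snd (f k) = 0) -> Csum n f = f i.
Proof.
  intros Hi H. apply Cpx_ext; [rewrite Csum_fst; apply (Rsum_delta n (fun k => fst (f k)))
    |rewrite Csum_snd; apply (Rsum_delta n (fun k => snd (f k)))]; auto;
  intros; apply H; auto.
Qed.

Lemma Csum_ext_lt n f g : (forall k, (k < n)%nat -> f k = g k) -> Csum n f = Csum n g.
Proof. intros H; apply Csum_list_ext; intros x Hx; apply in_seq in Hx; apply H; lia. Qed.

Definition Gmat (n : nat) : mat :=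
  fun k j => Cmul (RtoC (/ sqrt (INR n))) (Cexpi (2 * PI * INR k * INR j / INR n)).

Lemma FG_id n i j : (0 < n)%nat -> (i < n)%nat -> (j < n)%nat ->
  mmul n (Fmat n) (Gmat n) i j = idm i j.
Proof.
  intros Hn Hi Hj. assert (HnR : 0 < INR n) by (apply lt_0_INR; auto).
  unfold mmul. transitivity (Cmul (RtoC (/ INR n))
     (Csum n (fun k => Cexpi (2 * PI * INR k * IZR (Z.of_nat j - Z.of_nat i) / INR n)))).
  - unfold Csum at 2. rewrite Cmul_Csum_l. apply Csum_ext_lt. intros k _.
    unfold Fmat, Gmat. rewrite (Cmul_comm (RtoC _) (Cexpi (2 * PI * INR k * INR j / INR n))).
    rewrite !Cmul_assoc. rewrite <- (Cmul_assoc (RtoC _) (Cexpi _)).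
    rewrite Cexpi_add. rewrite (Cmul_comm _ (RtoC _)), Cmul_assoc, Cmul_RtoC.
    f_equal. f_equal. rewrite <- Rinv_mult, sqrt_sqrt; auto; lra.
    f_equal. rewrite minus_IZR, <- !INR_IZR_INZ. field. lra.
  - rewrite roots_unity by auto. unfold idm.
    destruct (Nat.eqb_spec i j).
    + subst. replace (Z.of_nat j - Z.of_nat j)%Z with 0%Z by lia. rewrite Zmod_0_l. simpl.
      rewrite Cmul_RtoC. rewrite Rinv_l by lra. reflexivity.
    + replace ((Z.of_nat j - Z.of_nat i) mod Z.of_nat n =? 0)%Z with false.
      apply Cpx_ext; unfold Cmul, C0; simpl; ring.
      symmetry. apply Z.eqb_neq. intros E. apply Z.mod_divide in E; [|lia].
      destruct E as [q Hq]. destruct (Z.eq_dec q 0). subst; lia. nia.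
Qed.

Lemma idm_fst_snd i k : k <> i -> fst (idm i k) = 0 /\ snd (idm i k) = 0.
Proof. intros; unfold idm. destruct (Nat.eqb_spec i k); [lia|]. simpl; auto. Qed.

Lemma Finv_eq n Finv k j : (0 < n)%nat -> is_inverse n (Fmat n) Finv ->
  (k < n)%nat -> (j < n)%nat -> Finv k j = Gmat n k j.
Proof.
  intros Hn HI Hk Hj.
  transitivity (Csum n (fun l => Cmul (Finv k l) (idm l j))).
  { symmetry. rewrite (Csum_delta n _ j Hj). unfold idm; rewrite Nat.eqb_refl.
    apply Cpx_ext; unfold Cmul, C1; simpl; ring.
    intros l Hl Hne. unfold idm. destruct (Nat.eqb_spec l j); [lia|]. unfold Cmul, C0; simpl; split; ring. }
  transitivity (Csum n (fun l => Cmul (Finv k l) (mmul n (Fmat n) (Gmat n) l j))).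
  { apply Csum_ext_lt; intros. rewrite FG_id; auto. }
  unfold mmul. unfold Csum at 1.
  transitivity (Csum_list (fun l => Csum n (fun m => Cmul (Finv k l) (Cmul (Fmat n l m) (Gmat n m j)))) (seq 0 n)).
  { apply Csum_list_ext; intros. unfold Csum. apply Cmul_Csum_l. }
  unfold Csum at 1. rewrite Csum_list_swap.
  transitivity (Csum n (fun m => Cmul (idm k m) (Gmat n m j))).
  { apply Csum_list_ext; intros m Hm. apply in_seq in Hm.
    destruct (HI k m Hk ltac:(lia)) as [_ H2]. rewrite <- H2. unfold mmul.
    unfold Csum. rewrite Cmul_Csum_r. apply Csum_list_ext; intros. apply Cmul_assoc. }
  rewrite (Csum_delta n _ k Hk). unfold idm; rewrite Nat.eqb_refl.
  apply Cpx_ext; unfold Cmul, C1; simpl; ring.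
  intros m Hm Hne. unfold idm. destruct (Nat.eqb_spec k m); [lia|]. unfold Cmul, C0; simpl; split; ring.
Qed.

Definition isdiag (D : mat) (f : nat -> R) : Prop :=
  forall i j, D i j = if Nat.eqb i j then RtoC (f i) else C0.

Lemma mmul_diag_l n D f B i j : isdiag D f -> (i < n)%nat ->
  mmul n D B i j = Cmul (RtoC (f i)) (B i j).
Proof.
  intros HD Hi. unfold mmul. rewrite (Csum_delta n _ i Hi). rewrite HD, Nat.eqb_refl; auto.
  intros k Hk Hne. rewrite HD. destruct (Nat.eqb_spec i k); [lia|]. unfold Cmul, C0; simpl; split; ring.
Qed.
Lemma mmul_diag_r n D f B i j : isdiag D f -> (j < n)%nat ->
  mmul n B D i j = Cmul (RtoC (f j)) (B i j).
Proof.
  intros HD Hj. unfold mmul. rewrite (Csum_delta n _ j Hj). rewrite HD, Nat.eqb_refl; auto.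
  apply Cmul_comm.
  intros k Hk Hne. rewrite HD. destruct (Nat.eqb_spec k j); [lia|]. unfold Cmul, C0; simpl; split; ring.
Qed.
Lemma comm_diag n D f B i j : isdiag D f -> (i < n)%nat -> (j < n)%nat ->
  comm n D B i j = Cmul (RtoC (f i - f j)) (B i j).
Proof.
  intros HD Hi Hj. unfold comm, msub. rewrite (mmul_diag_l n D f), (mmul_diag_r n D f); auto.
  apply Cpx_ext; unfold Csub, Cmul, RtoC; simpl; ring.
Qed.
Lemma mvec_diag n E e y i : (i < n)%nat ->
  (forall j, (j < n)%nat -> E i j = if Nat.eqb i j then RtoC (e i) else C0) ->
  mvec n E y i = Cmul (RtoC (e i)) (y i).
Proof.
  intros Hi HE. unfold mvec. rewrite (Csum_delta n _ i Hi). rewrite HE, Nat.eqb_refl; auto.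
  intros k Hk Hne. rewrite HE by auto. destruct (Nat.eqb_spec i k); [lia|]. unfold Cmul, C0; simpl; split; ring.
Qed.
Lemma mscale_diagm a e : isdiag (mscale a (diagm (fun i => RtoC (e i)))) (fun i => a * e i).
Proof.
  intros i j. unfold mscale, diagm. destruct (Nat.eqb i j); apply Cpx_ext; unfold Cmul, RtoC, C0; simpl; ring.
Qed.
Lemma madd_idm D f : isdiag D f -> isdiag (madd D idm) (fun i => f i + 1).
Proof.
  intros HD i j. unfold madd, idm. rewrite HD. destruct (Nat.eqb i j); apply Cpx_ext; unfold Cadd, RtoC, C0, C1; simpl; ring.
Qed.

Definition FVG (v : list R -> Cpx) (z : list Z) (n : nat) (i j : nat) : Cpx :=
  Cmul (RtoC (/ INR n)) (Csum n (fun k => Cmul (v (latpt z n k))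
     (Cexpi (2 * PI * INR k * IZR (Z.of_nat j - Z.of_nat i) / INR n)))).

Lemma W_entry n v z Finv i j : (0 < n)%nat -> is_inverse n (Fmat n) Finv ->
  (i < n)%nat -> (j < n)%nat ->
  mmul n (mmul n (Fmat n) (Vmat v z n)) Finv i j = FVG v z n i j.
Proof.
  intros Hn HI Hi Hj. assert (HnR : 0 < INR n) by (apply lt_0_INR; auto).
  unfold mmul at 1. unfold FVG. unfold Csum at 2. rewrite Cmul_Csum_l.
  apply Csum_ext_lt. intros k Hk. rewrite (Finv_eq n Finv k j); auto.
  assert (E : mmul n (Fmat n) (Vmat v z n) i k = Cmul (Fmat n i k) (v (latpt z n k))).
  { unfold mmul. rewrite (Csum_delta n _ k Hk). unfold Vmat, diagm. rewrite Nat.eqb_refl. auto.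
    intros l Hl Hne. unfold Vmat, diagm. destruct (Nat.eqb_spec l k); [lia|]. unfold Cmul, C0; simpl; split; ring. }
  rewrite E. unfold Fmat, Gmat.
  apply Cpx_ext; unfold Cmul, RtoC, Cexpi; simpl;
  replace (2 * PI * INR k * IZR (Z.of_nat j - Z.of_nat i) / INR n) with
     (- (2 * PI * INR k * INR i / INR n) + 2 * PI * INR k * INR j / INR n)
     by (rewrite minus_IZR, <- !INR_IZR_INZ; field; lra);
  rewrite cos_plus, sin_plus, cos_neg, sin_neg;
  assert (/ INR n = / sqrt (INR n) * / sqrt (INR n)) by (rewrite <- Rinv_mult, sqrt_sqrt; lra);
  rewrite H; ring.
Qed.

Lemma dotZR_latpt (m z : list Z) n k : (0 < n)%nat ->
  exists Q : Z, dotZR m (latpt z n k) =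
    (IZR (Z.of_nat k * dotZ m z) - IZR (Z.of_nat n) * IZR Q) / INR n.
Proof.
  intros Hn. assert (HnR : 0 < INR n) by (apply lt_0_INR; auto).
  revert z. induction m as [|a m IH]; intros z.
  - exists 0%Z. unfold dotZR, dotZ; simpl. rewrite Z.mul_0_r. unfold Rsum_list; simpl. field; lra.
  - destruct z as [|b z].
    + exists 0%Z. unfold dotZR, dotZ, latpt; simpl. rewrite Z.mul_0_r. unfold Rsum_list; simpl. field; lra.
    + destruct (IH z) as [Q HQ]. exists (a * ((Z.of_nat k * b) / Z.of_nat n) + Q)%Z.
      unfold dotZR, latpt in *. simpl. rewrite Rsum_list_cons. simpl.
      rewrite HQ. unfold dotZ; simpl. fold (dotZ m z).
      rewrite Z.mod_eq by lia.
      repeat (rewrite ?mult_IZR, ?plus_IZR, ?minus_IZR).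
      rewrite <- !INR_IZR_INZ. field. lra.
Qed.

Definition Pk (d : nat) (cv : list Z -> Cpx) (z : list Z) (n N k : nat) : Cpx :=
  fourier_partial d cv (latpt z n k) N.

Definition aind (z : list Z) (n : nat) (m : list Z) (i j : nat) : R :=
  if Z.eqb ((dotZ m z + Z.of_nat j - Z.of_nat i) mod Z.of_nat n) 0 then 1 else 0.

Definition WN d cv z n N i j : Cpx :=
  Cmul (RtoC (/ INR n)) (Csum n (fun k => Cmul (Pk d cv z n N k)
     (Cexpi (2 * PI * INR k * IZR (Z.of_nat j - Z.of_nat i) / INR n)))).

Lemma WN_formula d cv z n N i j : (0 < n)%nat ->
  WN d cv z n N i j = Csum_list (fun m => Cmul (cv m) (RtoC (aind z n m i j))) (box d N).
Proof.
  intros Hn. assert (HnR : 0 < INR n) by (apply lt_0_INR; auto).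
  unfold WN, Pk, fourier_partial. unfold Csum.
  transitivity (Cmul (RtoC (/ INR n)) (Csum_list (fun m => Csum_list (fun k =>
     Cmul (Cmul (cv m) (Cexpi (2 * PI * dotZR m (latpt z n k))))
          (Cexpi (2 * PI * INR k * IZR (Z.of_nat j - Z.of_nat i) / INR n))) (seq 0 n)) (box d N))).
  { f_equal. rewrite Csum_list_swap. apply Csum_list_ext; intros. apply Cmul_Csum_r. }
  rewrite Cmul_Csum_l. apply Csum_list_ext. intros m _.
  transitivity (Cmul (RtoC (/ INR n)) (Cmul (cv m)
      (Csum n (fun k => Cexpi (2 * PI * INR k * IZR (dotZ m z + Z.of_nat j - Z.of_nat i) / INR n))))).
  { f_equal. unfold Csum. rewrite Cmul_Csum_l. apply Csum_list_ext; intros k _.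
    rewrite <- Cmul_assoc. f_equal.
    destruct (dotZR_latpt m z n k Hn) as [Q HQ]. rewrite HQ.
    replace (2 * PI * ((IZR (Z.of_nat k * dotZ m z) - IZR (Z.of_nat n) * IZR Q) / INR n))
      with (2 * PI * INR k * IZR (dotZ m z) / INR n + 2 * PI * IZR (- Q)).
    rewrite Cexpi_periodic, Cexpi_add. f_equal.
    repeat (rewrite ?plus_IZR, ?minus_IZR). rewrite <- !INR_IZR_INZ. field. lra.
    rewrite opp_IZR, mult_IZR, <- !INR_IZR_INZ. field. lra. }
  rewrite roots_unity by auto. unfold aind.
  replace (dotZ m z + Z.of_nat j - Z.of_nat i)%Z with (dotZ m z + Z.of_nat j - Z.of_nat i)%Z by lia.
  destruct (Z.eqb _ 0); apply Cpx_ext; unfold Cmul, RtoC, C0; simpl; field; lra.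
Qed.

Lemma WN_bound d cv z n N i j : (0 < n)%nat ->
  Cabs (WN d cv z n N i j) <= Rsum_list (fun m => Cabs (cv m) * aind z n m i j) (box d N).
Proof.
  intros Hn. rewrite WN_formula by auto. eapply Rle_trans. apply Cabs_Csum_list.
  apply Rsum_list_le; intros. rewrite Cabs_mul, Cabs_RtoC. unfold aind.
  destruct (Z.eqb _ 0); rewrite ?Rabs_R1, ?Rabs_R0; lra.
Qed.

Lemma Csum_add n f g : Csum n (fun k => Cadd (f k) (g k)) = Cadd (Csum n f) (Csum n g).
Proof.
  apply Cpx_ext; unfold Cadd at 1; simpl; rewrite ?Csum_fst, ?Csum_snd; unfold Cadd; simpl;
  rewrite ?Csum_fst, ?Csum_snd; unfold Rsum; rewrite <- Rsum_list_plus; reflexivity.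
Qed.

Lemma FVG_WN d cv v z n N i j : (0 < n)%nat ->
  Cabs (FVG v z n i j) <= Cabs (WN d cv z n N i j) +
     / INR n * Rsum n (fun k => Cabs (Csub (v (latpt z n k)) (Pk d cv z n N k))).
Proof.
  intros Hn. assert (HnR : 0 < INR n) by (apply lt_0_INR; auto).
  set (e := fun k => Cexpi (2 * PI * INR k * IZR (Z.of_nat j - Z.of_nat i) / INR n)).
  assert (E : FVG v z n i j = Cadd (WN d cv z n N i j) (Cmul (RtoC (/ INR n))
     (Csum n (fun k => Cmul (Csub (v (latpt z n k)) (Pk d cv z n N k)) (e k))))).
  { unfold FVG, WN. fold e.
    transitivity (Cmul (RtoC (/ INR n)) (Csum n (fun k => Cadd (Cmul (Pk d cv z n N k) (e k))
       (Cmul (Csub (v (latpt z n k)) (Pk d cv z n N k)) (e k))))).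
    f_equal. apply Csum_ext_lt; intros. apply Cpx_ext; unfold Cadd, Cmul, Csub; simpl; ring.
    rewrite Csum_add. apply Cpx_ext; unfold Cadd, Cmul; simpl; ring. }
  rewrite E. eapply Rle_trans. apply Cabs_add. apply Rplus_le_compat_l.
  rewrite Cabs_mul, Cabs_RtoC, Rabs_pos_eq by (left; apply Rinv_0_lt_compat; auto).
  apply Rmult_le_compat_l. left; apply Rinv_0_lt_compat; auto.
  eapply Rle_trans. apply Cabs_Csum_list. apply Rsum_list_le; intros.
  rewrite Cabs_mul. unfold e; rewrite Cabs_Cexpi. lra.
Qed.

Lemma conv_uniform (V : nat -> Cpx) (P : nat -> nat -> Cpx) n :
  (forall k, (k < n)%nat -> Un_cv (fun N => fst (P N k)) (fst (V k)) /\
                           Un_cv (fun N => snd (P N k)) (snd (V k))) ->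
  forall eps, 0 < eps -> exists N0, forall N, (N >= N0)%nat -> forall k, (k < n)%nat ->
    Cabs (Csub (V k) (P N k)) <= eps.
Proof.
  induction n; intros H eps He.
  - exists 0%nat; intros; lia.
  - destruct (IHn ltac:(intros; apply H; lia) eps He) as [N1 HN1].
    destruct (H n ltac:(lia)) as [H1 H2].
    destruct (H1 (eps/2) ltac:(lra)) as [N2 HN2].
    destruct (H2 (eps/2) ltac:(lra)) as [N3 HN3].
    exists (N1 + N2 + N3)%nat. intros N HN k Hk.
    destruct (Nat.eq_dec k n).
    + subst. eapply Rle_trans. apply Cabs_le_comp. unfold Csub; simpl.
      specialize (HN2 N ltac:(lia)); specialize (HN3 N ltac:(lia)). unfold Rdist in *.
      rewrite (Rabs_minus_sym (fst (V n))), (Rabs_minus_sym (snd (V n))). lra.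
    + apply HN1; lia.
Qed.

Lemma cs_step X Y C Aa B : 0 <= Aa -> 0 <= B -> C * C <= Aa * B ->
  (X * Y + C) * (X * Y + C) <= (X * X + Aa) * (Y * Y + B).
Proof.
  intros HA HB IH.
  assert (K : 2 * X * Y * C <= X * X * B + Y * Y * Aa).
  { destruct (Req_dec Aa 0) as [E|E].
    - subst Aa. assert (C * C <= 0) by lra.
      assert (C = 0) by nra. subst C. nra.
    - assert (Aa * (X * X * B + Y * Y * Aa - 2 * X * Y * C) =
              (Y * Aa - X * C) * (Y * Aa - X * C) + X * X * (Aa * B - C * C)) by ring.
      assert (0 <= (Y * Aa - X * C) * (Y * Aa - X * C) + X * X * (Aa * B - C * C)).
      { apply Rplus_le_le_0_compat. apply Rle_0_sqr. apply Rmult_le_pos. apply Rle_0_sqr. lra. }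
      assert (0 < Aa) by lra.
      assert (0 <= X * X * B + Y * Y * Aa - 2 * X * Y * C).
      { apply (Rmult_le_reg_l Aa); try lra. }
      lra. }
  nra.
Qed.

Lemma cauchy_schwarz_list {A} (a b : A -> R) l :
  Rsum_list (fun x => a x * b x) l * Rsum_list (fun x => a x * b x) l <=
  Rsum_list (fun x => a x * a x) l * Rsum_list (fun x => b x * b x) l.
Proof.
  induction l as [|x l IH]. unfold Rsum_list; simpl; lra.
  rewrite !Rsum_list_cons. apply cs_step; auto;
  apply Rsum_list_nonneg; intros; nra.
Qed.

Lemma kfactor_ge1 alpha a : 1 <= kfactor alpha a.
Proof. unfold kfactor. destruct (Z.eqb a 0). lra. apply Rmax_r. Qed.
Lemma kweight_ge1 alpha m : 1 <= kweight alpha m.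
Proof.
  induction m; unfold kweight in *; simpl. lra.
  pose proof (kfactor_ge1 alpha a). nra.
Qed.
Lemma normsqZ_nonneg m : 0 <= normsqZ m.
Proof. unfold normsqZ. apply Rsum_list_nonneg; intros; nra. Qed.

Lemma CS_korobov alpha (c : list Z -> Cpx) (g : list Z -> R) l :
  Rsum_list (fun m => Cabs (c m) * g m) l <=
  sqrt (Rsum_list (fun m => Cmod2 (c m) * kweight alpha m) l) *
  sqrt (Rsum_list (fun m => g m * g m / kweight alpha m) l).
Proof.
  set (a := fun m => Cabs (c m) * sqrt (kweight alpha m)).
  set (b := fun m => g m / sqrt (kweight alpha m)).
  assert (Hw : forall m, 0 < kweight alpha m) by (intros; pose proof (kweight_ge1 alpha m); lra).
  assert (Hsw : forall m, 0 < sqrt (kweight alpha m)) by (intros; apply sqrt_lt_R0; auto).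
  assert (E1 : Rsum_list (fun m => Cabs (c m) * g m) l = Rsum_list (fun x => a x * b x) l).
  { apply Rsum_list_ext; intros; unfold a, b. field. specialize (Hsw x); lra. }
  assert (E2 : Rsum_list (fun m => Cmod2 (c m) * kweight alpha m) l = Rsum_list (fun x => a x * a x) l).
  { apply Rsum_list_ext; intros; unfold a.
    replace (Cabs (c x) * sqrt (kweight alpha x) * (Cabs (c x) * sqrt (kweight alpha x))) with
      ((Cabs (c x) * Cabs (c x)) * (sqrt (kweight alpha x) * sqrt (kweight alpha x))) by ring.
    rewrite Cabs_sq, sqrt_sqrt; auto. specialize (Hw x); lra. }
  assert (E3 : Rsum_list (fun m => g m * g m / kweight alpha m) l = Rsum_list (fun x => b x * b x) l).
  { apply Rsum_list_ext; intros; unfold b.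
    replace (g x / sqrt (kweight alpha x) * (g x / sqrt (kweight alpha x))) with
      (g x * g x / (sqrt (kweight alpha x) * sqrt (kweight alpha x))) by (field; specialize (Hsw x); lra).
    rewrite sqrt_sqrt; auto. specialize (Hw x); lra. }
  rewrite E1, E2, E3. rewrite <- sqrt_mult_alt by (apply Rsum_list_nonneg; intros; nra).
  eapply Rle_trans. apply RRle_abs. rewrite <- sqrt_square with (x := Rabs _) by apply Rabs_pos.
  apply sqrt_le_1_alt. rewrite <- Rabs_mult. rewrite Rabs_pos_eq by nra.
  apply cauchy_schwarz_list.
Qed.

Definition phi (alpha : R) (q : nat) (a : Z) : R := (1 + 2 * (IZR a * IZR a)) ^ q / kfactor alpha a.

Lemma phi_nonneg alpha q a : 0 <= phi alpha q a.
Proof.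
  unfold phi. pose proof (kfactor_ge1 alpha a). apply Rle_mult_inv_pos.
  apply pow_le. nra. lra.
Qed.

Lemma pointwise_prod alpha q m :
  (1 + 2 * normsqZ m) ^ q / kweight alpha m <= fold_right Rmult 1 (map (phi alpha q) m).
Proof.
  induction m as [|a m IH]; simpl.
  - unfold normsqZ, kweight; simpl. unfold Rsum_list; simpl.
    replace (1 + 2 * 0) with 1 by ring. rewrite pow1. lra.
  - unfold normsqZ in *. rewrite Rsum_list_cons. unfold kweight in *; simpl.
    set (s := Rsum_list (fun a0 : Z => IZR a0 * IZR a0) m) in *.
    set (w := fold_right Rmult 1 (map (kfactor alpha) m)) in *.
    assert (Hs : 0 <= s) by (apply Rsum_list_nonneg; intros; nra).
    assert (Hw : 1 <= w) by (apply (kweight_ge1 alpha m)).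
    pose proof (kfactor_ge1 alpha a).
    assert (H1 : (1 + 2 * (IZR a * IZR a + s)) ^ q <= (1 + 2 * (IZR a * IZR a)) ^ q * (1 + 2 * s) ^ q).
    { rewrite <- Rpow_mult_distr. apply pow_incr. split. nra. nra. }
    pose proof (phi_nonneg alpha q a).
    apply Rle_trans with (phi alpha q a * ((1 + 2 * s) ^ q / w)).
    + unfold phi. unfold Rdiv. rewrite Rinv_mult.
      replace ((1 + 2 * (IZR a * IZR a)) ^ q * / kfactor alpha a * ((1 + 2 * s) ^ q * / w))
        with ((1 + 2 * (IZR a * IZR a)) ^ q * (1 + 2 * s) ^ q * (/ kfactor alpha a * / w)) by ring.
      apply Rmult_le_compat_r. apply Rmult_le_pos; left; apply Rinv_0_lt_compat; lra. auto.
    + apply Rmult_le_compat_l; auto.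
Qed.

Lemma box_prod_sum alpha q d N :
  Rsum_list (fun m => fold_right Rmult 1 (map (phi alpha q) m)) (box d N) =
  (Rsum_list (phi alpha q) (zrange N)) ^ d.
Proof.
  induction d; simpl.
  - unfold Rsum_list; simpl; ring.
  - rewrite Rsum_list_flat_map.
    transitivity (Rsum_list (fun a => (Rsum_list (phi alpha q) (zrange N)) ^ d * phi alpha q a) (zrange N)).
    + apply Rsum_list_ext; intros a _. rewrite Rsum_list_map. simpl.
      rewrite Rsum_list_scal, IHd. ring.
    + rewrite Rsum_list_scal. ring.
Qed.

Lemma exp_sub u v : exp (u - v) = exp u / exp v.
Proof. unfold Rminus, Rdiv. rewrite exp_plus, exp_Ropp. reflexivity. Qed.

Lemma telescope_ineq x t : 1 <= x -> 0 < t ->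
  t / Rpower (x + 1) (t + 1) <= Rpower x (- t) - Rpower (x + 1) (- t).
Proof.
  intros Hx Ht. set (a := x + 1). assert (Ha : 0 < a) by (unfold a; lra).
  unfold Rpower.
  assert (Hl : 1 / a <= ln a - ln x).
  { pose proof (exp_ineq1_le (ln x - ln a)). rewrite exp_sub, !exp_ln in H by lra.
    unfold a in *. replace (x / (x + 1)) with (1 - 1 / (x + 1)) in H by (field; lra). lra. }
  assert (E : exp (- t * ln x) = exp (- t * ln a) * exp (t * (ln a - ln x))).
  { rewrite <- exp_plus. f_equal. ring. }
  pose proof (exp_ineq1_le (t * (ln a - ln x))).
  assert (E2 : exp ((t + 1) * ln a) = exp (t * ln a) * a).
  { replace ((t+1)*ln a) with (t*ln a + ln a) by ring. rewrite exp_plus, exp_ln by lra. reflexivity. }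
  assert (E3 : exp (- t * ln a) = / exp (t * ln a)).
  { rewrite <- exp_Ropp. f_equal; ring. }
  pose proof (exp_pos (t * ln a)). pose proof (exp_pos (- t * ln a)).
  rewrite E, E2, E3. rewrite E3 in H1.
  apply Rle_trans with (/ exp (t * ln a) * (t * (ln a - ln x))).
  - replace (t / (exp (t * ln a) * a)) with (/ exp (t * ln a) * (t * (1 / a))) by (field; lra).
    apply Rmult_le_compat_l. lra. apply Rmult_le_compat_l; lra.
  - assert (/ exp (t * ln a) * (t * (ln a - ln x)) <= / exp (t * ln a) * (exp (t * (ln a - ln x)) - 1)).
    { apply Rmult_le_compat_l; lra. } lra.
Qed.

Lemma zrange_S_sum f N :
  Rsum_list f (zrange (S N)) = f (- Z.of_nat (S N))%Z + Rsum_list f (zrange N) + f (Z.of_nat (S N)).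
Proof.
  unfold zrange. replace (2 * S N + 1)%nat with (S (S (2 * N + 1))) by lia.
  rewrite seq_S. change (seq 0 (S (2 * N + 1))) with (0%nat :: seq 1 (2 * N + 1)).
  rewrite map_app, Rsum_list_app. cbn [map].
  rewrite !Rsum_list_cons, Rsum_list_nil.
  rewrite <- seq_shift, map_map.
  replace (0 + S (2 * N + 1))%nat with (S (2 * N + 1)) by lia.
  replace (Z.of_nat 0 - Z.of_nat (S N))%Z with (- Z.of_nat (S N))%Z by lia.
  replace (Z.of_nat (S (2 * N + 1)) - Z.of_nat (S N))%Z with (Z.of_nat (S N)) by lia.
  replace (map (fun x : nat => (Z.of_nat (S x) - Z.of_nat (S N))%Z) (seq 0 (2 * N + 1)))
    with (map (fun k : nat => (Z.of_nat k - Z.of_nat N)%Z) (seq 0 (2 * N + 1))).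
  ring. apply map_ext; intros; lia.
Qed.

Lemma Rpower_1_base y : Rpower 1 y = 1.
Proof. unfold Rpower. rewrite ln_1, Rmult_0_r, exp_0. reflexivity. Qed.

Lemma phi_bound alpha q (a : Z) : (a <> 0)%Z ->
  phi alpha q a <= 3 ^ q / Rpower (IZR (Z.abs a)) (2 * alpha - INR (2 * q)).
Proof.
  intros Ha. set (A := IZR (Z.abs a)).
  assert (HA : 1 <= A) by (unfold A; apply IZR_le; lia).
  assert (Hsq : IZR a * IZR a = A * A).
  { unfold A. rewrite abs_IZR. rewrite <- Rabs_mult. rewrite Rabs_pos_eq; auto. nra. }
  unfold phi, kfactor. apply Z.eqb_neq in Ha. rewrite Ha.
  assert (Hp : 0 < Rpower A (2 * alpha)) by (unfold Rpower; apply exp_pos).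
  apply Rle_trans with ((3 * (A * A)) ^ q / Rpower A (2 * alpha)).
  - unfold Rdiv. apply Rmult_le_compat.
    + apply pow_le. nra.
    + left; apply Rinv_0_lt_compat. apply Rlt_le_trans with (Rpower A (2 * alpha)); auto. apply Rmax_l.
    + apply pow_incr. rewrite Hsq. nra.
    + apply Rinv_le_contravar; auto. apply Rmax_l.
  - rewrite Rpow_mult_distr. rewrite <- pow_sqr, <- (Rpower_pow (2 * q) A) by lra.
    unfold Rminus. rewrite Rpower_plus, Rpower_Ropp.
    assert (0 < Rpower A (INR (2 * q))) by (unfold Rpower; apply exp_pos).
    right. field. lra.
Qed.

Lemma zrange_sum_bound alpha q : 1 < 2 * alpha - INR (2 * q) ->
  exists C, forall N, Rsum_list (phi alpha q) (zrange N) <= C.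
Proof.
  intros Hs. set (s := 2 * alpha - INR (2 * q)) in *. set (t := s - 1).
  assert (Ht : 0 < t) by (unfold t; lra).
  assert (H3 : 0 < 3 ^ q) by (apply pow_lt; lra).
  set (B := 3 ^ q / t).
  assert (HB : 0 < B) by (unfold B; apply Rdiv_lt_0_compat; auto).
  assert (phi0 : phi alpha q 0 = 1).
  { unfold phi, kfactor; simpl. replace (1 + 2 * (0 * 0)) with 1 by ring. rewrite pow1. field. }
  assert (phiN : forall N : nat, phi alpha q (Z.of_nat (S N)) <= 3 ^ q / Rpower (INR (S N)) s /\
                            phi alpha q (- Z.of_nat (S N))%Z <= 3 ^ q / Rpower (INR (S N)) s).
  { intros N. split.
    - pose proof (phi_bound alpha q (Z.of_nat (S N)) ltac:(lia)).
      rewrite Z.abs_eq in H by lia. rewrite <- INR_IZR_INZ in H. exact H.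
    - pose proof (phi_bound alpha q (- Z.of_nat (S N))%Z ltac:(lia)).
      rewrite Z.abs_neq in H by lia. rewrite Z.opp_involutive, <- INR_IZR_INZ in H. exact H. }
  assert (Inv : forall N, Rsum_list (phi alpha q) (zrange (S N)) <=
                  1 + 2 * 3 ^ q + 2 * B - 2 * B * Rpower (INR (S N)) (- t)).
  { induction N.
    - rewrite zrange_S_sum. unfold zrange; simpl. unfold Rsum_list; simpl.
      rewrite phi0. destruct (phiN 0%nat) as [Q1 Q2]. simpl in Q1, Q2.
      rewrite Rpower_1_base in *. unfold Rdiv in Q1, Q2. rewrite Rinv_1, Rmult_1_r in Q1, Q2. lra.
    - rewrite zrange_S_sum. destruct (phiN (S N)) as [Q1 Q2].
      pose proof (telescope_ineq (INR (S N)) t ltac:(rewrite S_INR; pose proof (pos_INR N); lra) Ht).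
      replace (INR (S N) + 1) with (INR (S (S N))) in H by (rewrite (S_INR (S N)); auto).
      replace (t + 1) with s in H by (unfold t; ring).
      assert (3 ^ q / Rpower (INR (S (S N))) s <= B * (Rpower (INR (S N)) (- t) - Rpower (INR (S (S N))) (- t))).
      { unfold B. replace (3 ^ q / Rpower (INR (S (S N))) s) with (3 ^ q / t * (t / Rpower (INR (S (S N))) s)).
        apply Rmult_le_compat_l. left; apply Rdiv_lt_0_compat; auto. exact H. field. repeat split; apply Rgt_not_eq; try lra; unfold Rpower; apply exp_pos. }
      lra. }
  exists (1 + 2 * 3 ^ q + 2 * B). intros N. destruct N.
  - unfold zrange; simpl. unfold Rsum_list; simpl. rewrite phi0. lra.
  - specialize (Inv N). assert (0 < Rpower (INR (S N)) (- t)) by (unfold Rpower; apply exp_pos). nra.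
Qed.

Lemma kor_bound d alpha cv p : korobov d alpha cv -> 1 < 2 * alpha - INR (2 * (2 * p)) ->
  exists S0, 0 <= S0 /\ forall N,
    Rsum_list (fun m => Cabs (cv m) * (1 + 2 * normsqZ m) ^ p) (box d N) <= S0.
Proof.
  intros [M HM] Hs. destruct (zrange_sum_bound alpha (2 * p) Hs) as [C HC].
  exists (sqrt M * sqrt (C ^ d)). split. apply Rmult_le_pos; apply sqrt_pos.
  intros N. eapply Rle_trans. apply (CS_korobov alpha cv (fun m => (1 + 2 * normsqZ m) ^ p)).
  apply Rmult_le_compat; try apply sqrt_pos; apply sqrt_le_1_alt. apply HM.
  eapply Rle_trans with (Rsum_list (fun m => fold_right Rmult 1 (map (phi alpha (2 * p)) m)) (box d N)).
  - apply Rsum_list_le; intros m _. rewrite <- pow_add. replace (p + p)%nat with (2 * p)%nat by lia.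
    apply pointwise_prod.
  - rewrite box_prod_sum. apply pow_incr. split; auto.
    apply Rsum_list_nonneg; intros; apply phi_nonneg.
Qed.

Definition addZ (a b : list Z) : list Z := map (fun p => (fst p + snd p)%Z) (combine a b).

Lemma addZ_length a b : length (addZ a b) = Nat.min (length a) (length b).
Proof. unfold addZ. rewrite length_map, length_combine. auto. Qed.

Lemma addZ_normsq a b : normsqZ (addZ a b) <= 2 * normsqZ a + 2 * normsqZ b.
Proof.
  revert b; induction a as [|x a IH]; intros b.
  - unfold addZ, normsqZ; simpl. pose proof (normsqZ_nonneg b). unfold normsqZ in H.
    unfold Rsum_list at 1 2; simpl. lra.
  - destruct b as [|y b].
    + unfold addZ, normsqZ; simpl. pose proof (normsqZ_nonneg (x :: a)). unfold normsqZ in H.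
      unfold Rsum_list at 1 3; simpl. lra.
    + unfold addZ in *. simpl. unfold normsqZ in *. rewrite !Rsum_list_cons.
      specialize (IH b). rewrite plus_IZR. pose proof (Rle_0_sqr (IZR x - IZR y)). unfold Rsqr in H.
      nra.
Qed.

Lemma addZ_dot a b z : length a = length z -> length b = length z ->
  dotZ (addZ a b) z = (dotZ a z + dotZ b z)%Z.
Proof.
  revert b z; induction a as [|x a IH]; intros b z Ha Hb.
  - destruct z; simpl in *; try lia. destruct b; simpl in *; try lia. reflexivity.
  - destruct z as [|w z]; simpl in *; try lia. destruct b as [|y b]; simpl in *; try lia.
    unfold addZ, dotZ in *. simpl. rewrite IH by lia. lia.
Qed.

Lemma norm2Z_sq h : norm2Z h ^ 2 = normsqZ h.
Proof. unfold norm2Z. apply pow2_sqrt, normsqZ_nonneg. Qed.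

Lemma diff_bound d z n h m i j : (0 < n)%nat -> minimal_aa_set d z n h ->
  (i < n)%nat -> (j < n)%nat -> length m = d -> length z = d -> aind z n m i j = 1 ->
  Rabs (normsqZ (h i) - normsqZ (h j)) <= (1 + normsqZ (h j)) * (1 + 2 * normsqZ m).
Proof.
  intros Hn [H1 [_ H3]] Hi Hj Hm Hz Hind.
  unfold aind in Hind. destruct (Z.eqb_spec ((dotZ m z + Z.of_nat j - Z.of_nat i) mod Z.of_nat n) 0) as [E|E];
    [|exfalso; lra].
  destruct (H1 j Hj) as [Hlj Hcj].
  set (h' := addZ (h j) m).
  assert (Hl : length h' = d) by (unfold h'; rewrite addZ_length; lia).
  assert (Hc : congr h' z n i).
  { unfold congr in *. unfold h'. rewrite addZ_dot by lia.
    apply Z.mod_divide in E; [|lia]. apply Z.mod_divide in Hcj; [|lia].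
    apply Z.mod_divide; [lia|].
    replace (dotZ (h j) z + dotZ m z - Z.of_nat i)%Z with
      ((dotZ (h j) z - Z.of_nat j) + (dotZ m z + Z.of_nat j - Z.of_nat i))%Z by lia.
    apply Z.divide_add_r; auto. }
  pose proof (H3 i h' Hi Hl Hc) as Hmin.
  unfold norm2Z in Hmin. apply sqrt_le_0 in Hmin; try apply normsqZ_nonneg.
  pose proof (addZ_normsq (h j) m). fold h' in H.
  pose proof (normsqZ_nonneg (h i)). pose proof (normsqZ_nonneg (h j)). pose proof (normsqZ_nonneg m).
  apply Rabs_le. split; nra.
Qed.

Lemma ind_unique_j z n m i : (0 < n)%nat ->
  forall j j', (j < n)%nat -> (j' < n)%nat -> aind z n m i j = 1 -> aind z n m i j' = 1 -> j = j'.
Proof.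
  intros Hn j j' Hj Hj' E1 E2. unfold aind in *.
  destruct (Z.eqb_spec ((dotZ m z + Z.of_nat j - Z.of_nat i) mod Z.of_nat n) 0) as [A|A]; [|lra].
  destruct (Z.eqb_spec ((dotZ m z + Z.of_nat j' - Z.of_nat i) mod Z.of_nat n) 0) as [B|B]; [|lra].
  apply Z.mod_divide in A; [|lia]. apply Z.mod_divide in B; [|lia].
  assert (Z.divide (Z.of_nat n) (Z.of_nat j - Z.of_nat j')).
  { replace (Z.of_nat j - Z.of_nat j')%Z with ((dotZ m z + Z.of_nat j - Z.of_nat i) -
       (dotZ m z + Z.of_nat j' - Z.of_nat i))%Z by lia. apply Z.divide_sub_r; auto. }
  destruct H as [q Hq]. destruct (Z.eq_dec q 0). lia. nia.
Qed.

Lemma ind_unique_i z n m j : (0 < n)%nat ->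
  forall i i', (i < n)%nat -> (i' < n)%nat -> aind z n m i j = 1 -> aind z n m i' j = 1 -> i = i'.
Proof.
  intros Hn i i' Hi Hi' E1 E2. unfold aind in *.
  destruct (Z.eqb_spec ((dotZ m z + Z.of_nat j - Z.of_nat i) mod Z.of_nat n) 0) as [A|A]; [|lra].
  destruct (Z.eqb_spec ((dotZ m z + Z.of_nat j - Z.of_nat i') mod Z.of_nat n) 0) as [B|B]; [|lra].
  apply Z.mod_divide in A; [|lia]. apply Z.mod_divide in B; [|lia].
  assert (Z.divide (Z.of_nat n) (Z.of_nat i' - Z.of_nat i)).
  { replace (Z.of_nat i' - Z.of_nat i)%Z with ((dotZ m z + Z.of_nat j - Z.of_nat i) -
       (dotZ m z + Z.of_nat j - Z.of_nat i'))%Z by lia. apply Z.divide_sub_r; auto. }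
  destruct H as [q Hq]. destruct (Z.eq_dec q 0). lia. nia.
Qed.

Lemma ind_01 z n m i j : aind z n m i j = 0 \/ aind z n m i j = 1.
Proof. unfold aind. destruct (Z.eqb _ 0); auto. Qed.

Lemma ind_sum_j z n m i : (0 < n)%nat -> Rsum n (fun j => aind z n m i j) <= 1.
Proof.
  intros Hn. unfold aind.
  apply (Rsum_indicator_le1 n (fun j => Z.eqb ((dotZ m z + Z.of_nat j - Z.of_nat i) mod Z.of_nat n) 0)).
  intros j j' Hj Hj' A B. apply (ind_unique_j z n m i Hn j j' Hj Hj'); unfold aind; rewrite ?A, ?B; auto.
Qed.

Lemma ind_sum_i z n m j : (0 < n)%nat -> Rsum n (fun i => aind z n m i j) <= 1.
Proof.
  intros Hn. unfold aind.
  apply (Rsum_indicator_le1 n (fun i => Z.eqb ((dotZ m z + Z.of_nat j - Z.of_nat i) mod Z.of_nat n) 0)).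
  intros i i' Hi Hi' A B. apply (ind_unique_i z n m j Hn i i' Hi Hi'); unfold aind; rewrite ?A, ?B; auto.
Qed.

Lemma eps_le x y c : 0 <= c -> (forall eps, 0 < eps -> eps <= 1 -> x <= y + eps * c) -> x <= y.
Proof.
  intros Hc H. destruct (Rle_dec x y) as [|Hn]; auto. exfalso.
  set (e := Rmin 1 ((x - y) / (c + 1))).
  assert (He1 : e <= 1) by apply Rmin_l.
  assert (He2 : e <= (x - y) / (c + 1)) by apply Rmin_r.
  assert (Hp : 0 < (x - y) / (c + 1)) by (apply Rdiv_lt_0_compat; lra).
  assert (He0 : 0 < e) by (unfold e; apply Rmin_glb_lt; lra).
  specialize (H e He0 He1).
  assert (e * (c + 1) <= x - y).
  { apply (Rmult_le_compat_r (c + 1)) in He2; [|lra]. unfold Rdiv in He2.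
    rewrite Rmult_assoc, Rinv_l in He2 by lra. lra. }
  nra.
Qed.

Lemma Rsum_scal n f c : Rsum n (fun k => c * f k) = c * Rsum n f.
Proof. apply Rsum_list_scal. Qed.
Lemma Rsum_plus n f g : Rsum n (fun k => f k + g k) = Rsum n f + Rsum n g.
Proof. apply Rsum_list_plus. Qed.
Lemma Rsum_swap n m (f : nat -> nat -> R) :
  Rsum n (fun i => Rsum m (fun j => f i j)) = Rsum m (fun j => Rsum n (fun i => f i j)).
Proof. apply Rsum_list_swap. Qed.

Lemma weighted_cs n (K w : nat -> R) : (forall j, (j < n)%nat -> 0 <= K j) ->
  Rsum n (fun j => K j * w j) * Rsum n (fun j => K j * w j) <=
  Rsum n K * Rsum n (fun j => K j * (w j * w j)).
Proof.
  intros HK.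
  pose proof (cauchy_schwarz_list (fun j => sqrt (K j)) (fun j => sqrt (K j) * w j) (seq 0 n)).
  unfold Rsum.
  assert (E1 : Rsum_list (fun x => sqrt (K x) * (sqrt (K x) * w x)) (seq 0 n) = Rsum_list (fun j => K j * w j) (seq 0 n)).
  { apply Rsum_list_ext; intros x Hx; apply in_seq in Hx. rewrite <- Rmult_assoc, sqrt_sqrt; auto. apply HK; lia. }
  assert (E2 : Rsum_list (fun x => sqrt (K x) * sqrt (K x)) (seq 0 n) = Rsum_list K (seq 0 n)).
  { apply Rsum_list_ext; intros x Hx; apply in_seq in Hx. rewrite sqrt_sqrt; auto. apply HK; lia. }
  assert (E3 : Rsum_list (fun x => sqrt (K x) * w x * (sqrt (K x) * w x)) (seq 0 n) =
               Rsum_list (fun j => K j * (w j * w j)) (seq 0 n)).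
  { apply Rsum_list_ext; intros x Hx; apply in_seq in Hx.
    replace (sqrt (K x) * w x * (sqrt (K x) * w x)) with ((sqrt (K x) * sqrt (K x)) * (w x * w x)) by ring.
    rewrite sqrt_sqrt; auto. apply HK; lia. }
  cbv beta in H. rewrite E1, E2, E3 in H. exact H.
Qed.

Lemma schur n (a e : nat -> nat -> R) (b u : nat -> R) S :
  0 <= S ->
  (forall i j, (i < n)%nat -> (j < n)%nat -> 0 <= a i j) ->
  (forall j, 0 <= u j) -> (forall j, 0 <= b j) -> (forall i j, 0 <= e i j) ->
  (forall eps, 0 < eps -> exists K : nat -> nat -> R,
     (forall i j, (i < n)%nat -> (j < n)%nat -> 0 <= K i j) /\
     (forall i, (i < n)%nat -> Rsum n (fun j => K i j) <= S) /\
     (forall j, (j < n)%nat -> Rsum n (fun i => K i j) <= S) /\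
     (forall i j, (i < n)%nat -> (j < n)%nat -> a i j <= K i j * b j + eps * e i j)) ->
  Rsum n (fun i => Rsum n (fun j => a i j * u j) * Rsum n (fun j => a i j * u j)) <=
  S * S * Rsum n (fun j => (b j * u j) * (b j * u j)).
Proof.
  intros HS Ha Hu Hb He H.
  set (W := Rsum n (fun j => (b j * u j) * (b j * u j))).
  set (t := fun i => Rsum n (fun j => e i j * u j)).
  set (T := Rsum n (fun i => t i * t i)).
  assert (HW : 0 <= W) by (apply Rsum_nonneg; intros; nra).
  assert (HT : 0 <= T) by (apply Rsum_nonneg; intros; nra).
  assert (Ht : forall i, 0 <= t i) by (intros; apply Rsum_nonneg; intros; apply Rmult_le_pos; auto).
  apply eps_le with (c := S * S * W + 2 * T). pose proof (Rmult_le_pos S S HS HS). nra.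
  intros eps He0 He1. destruct (H eps He0) as [K [HK0 [HKr [HKc HaK]]]].
  set (s := fun i => Rsum n (fun j => K i j * (b j * u j))).
  assert (Hs : forall i, (i < n)%nat -> 0 <= s i).
  { intros; apply Rsum_nonneg; intros. apply Rmult_le_pos; auto. apply Rmult_le_pos; auto. }
  assert (Hr : forall i, (i < n)%nat ->
     Rsum n (fun j => a i j * u j) * Rsum n (fun j => a i j * u j) <= (1 + eps) * (s i * s i) + 2 * eps * (t i * t i)).
  { intros i Hi.
    assert (R0 : 0 <= Rsum n (fun j => a i j * u j)) by (apply Rsum_nonneg; intros; apply Rmult_le_pos; auto).
    assert (R1 : Rsum n (fun j => a i j * u j) <= s i + eps * t i).
    { unfold s, t. rewrite <- Rsum_scal, <- Rsum_plus. apply Rsum_le_lt; intros j Hj.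
      cbv beta. apply Rle_trans with ((K i j * b j + eps * e i j) * u j).
      apply Rmult_le_compat_r; auto. right; ring. }
    specialize (Hs i Hi). specialize (Ht i).
    set (r := Rsum n (fun j => a i j * u j)) in *.
    assert (r * r <= (s i + eps * t i) * (s i + eps * t i)) by (apply Rmult_le_compat; auto).
    assert (2 * (s i * t i) <= s i * s i + t i * t i) by (pose proof (Rle_0_sqr (s i - t i)); unfold Rsqr in *; nra).
    assert (eps * eps * (t i * t i) <= eps * (t i * t i)).
    { apply Rmult_le_compat_r. nra. nra. }
    assert (eps * (2 * (s i * t i)) <= eps * (s i * s i + t i * t i)) by (apply Rmult_le_compat_l; lra).
    nra. }
  assert (Hs2 : forall i, (i < n)%nat -> s i * s i <= S * Rsum n (fun j => K i j * ((b j * u j) * (b j * u j)))).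
  { intros i Hi. unfold s. eapply Rle_trans. apply weighted_cs. intros; auto.
    apply Rmult_le_compat_r. apply Rsum_nonneg; intros. apply Rmult_le_pos; auto. nra. auto. }
  assert (Hsum : Rsum n (fun i => s i * s i) <= S * S * W).
  { eapply Rle_trans. apply Rsum_le_lt. exact Hs2. rewrite Rsum_scal, Rsum_swap.
    rewrite Rmult_assoc. apply Rmult_le_compat_l; auto. unfold W. rewrite <- Rsum_scal.
    apply Rsum_le_lt; intros j Hj.
    replace (Rsum n (fun i => K i j * (b j * u j * (b j * u j)))) with
      ((b j * u j * (b j * u j)) * Rsum n (fun i => K i j)) by (rewrite <- Rsum_scal; apply Rsum_ext_lt; intros; ring).
    rewrite Rmult_comm. apply Rmult_le_compat_r. nra. auto. }
  eapply Rle_trans. apply Rsum_le_lt. exact Hr.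
  rewrite Rsum_plus, Rsum_scal, Rsum_scal. fold T.
  assert (0 <= Rsum n (fun i => s i * s i)) by (apply Rsum_nonneg; intros; nra).
  nra.
Qed.

Lemma box_length d N m : In m (box d N) -> length m = d.
Proof.
  revert m; induction d; simpl; intros m H.
  - destruct H as [H|[]]; subst; auto.
  - apply in_flat_map in H. destruct H as [a [_ Ha]]. apply in_map_iff in Ha.
    destruct Ha as [m' [E Hm']]. subst. simpl. f_equal; auto.
Qed.

Lemma latpt_length z n k : length (latpt z n k) = length z.
Proof. unfold latpt. apply length_map. Qed.

Definition ddf (gamma : R) (h : nat -> list Z) (i : nat) : R :=
  gamma / 2 * (4 * PI ^ 2 * norm2Z (h i) ^ 2).

Lemma dd_bound gamma d z n h m i j : 0 < gamma -> (0 < n)%nat -> minimal_aa_set d z n h ->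
  (i < n)%nat -> (j < n)%nat -> length m = d -> length z = d -> aind z n m i j = 1 ->
  Rabs (ddf gamma h i - ddf gamma h j) <=
  (1 + 2 * gamma * PI ^ 2) * (1 + ddf gamma h j) * (1 + 2 * normsqZ m).
Proof.
  intros Hg Hn Hmin Hi Hj Hm Hz Hind.
  pose proof (diff_bound d z n h m i j Hn Hmin Hi Hj Hm Hz Hind) as H.
  unfold ddf. rewrite !norm2Z_sq.
  set (k := 2 * gamma * PI ^ 2).
  assert (Hk : 0 < k) by (unfold k; pose proof PI_RGT_0; apply Rmult_lt_0_compat; [lra| apply pow_lt; lra]).
  replace (gamma / 2 * (4 * PI ^ 2 * normsqZ (h i)) - gamma / 2 * (4 * PI ^ 2 * normsqZ (h j)))
    with (k * (normsqZ (h i) - normsqZ (h j))) by (unfold k; field).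
  replace (gamma / 2 * (4 * PI ^ 2 * normsqZ (h j))) with (k * normsqZ (h j)) by (unfold k; field).
  rewrite Rabs_mult, (Rabs_pos_eq k) by lra.
  pose proof (normsqZ_nonneg (h j)). pose proof (normsqZ_nonneg m).
  apply Rle_trans with (k * ((1 + normsqZ (h j)) * (1 + 2 * normsqZ m))).
  apply Rmult_le_compat_l; lra.
  rewrite <- Rmult_assoc. apply Rmult_le_compat_r. lra. nra.
Qed.

Lemma main_gen (p : nat) d gamma alpha cv v :
  0 < gamma -> korobov d alpha cv ->
  (forall x : list R, length x = d -> fourier_series_at d cv x (v x)) ->
  1 < 2 * alpha - INR (2 * (2 * p)) ->
  exists c : R, forall n z h Finv (y : nat -> R) (A E : mat),
    (0 < n)%nat -> length z = d -> minimal_aa_set d z n h -> is_inverse n (Fmat n) Finv ->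
    (forall i j, (i < n)%nat -> (j < n)%nat ->
       Cabs (A i j) = Rabs (ddf gamma h i - ddf gamma h j) ^ p * / gamma * Cabs (FVG v z n i j)) ->
    (forall i j, (i < n)%nat -> (j < n)%nat ->
       E i j = if Nat.eqb i j then RtoC ((1 + ddf gamma h i) ^ p) else C0) ->
    vnorm n (mvec n A (realvec y)) <= c * vnorm n (mvec n E (realvec y)).
Proof.
  intros Hg Hkor Hfs Hs.
  destruct (kor_bound d alpha cv p Hkor Hs) as [S0 [HS0 HS0b]].
  set (c0 := 1 + 2 * gamma * PI ^ 2).
  assert (Hc0 : 1 <= c0) by (unfold c0; pose proof PI_RGT_0;
     assert (0 < 2 * gamma * PI ^ 2) by (apply Rmult_lt_0_compat; [lra|apply pow_lt; lra]); lra).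
  set (S := / gamma * c0 ^ p * S0).
  assert (HS : 0 <= S).
  { unfold S. apply Rmult_le_pos; auto. apply Rmult_le_pos. left; apply Rinv_0_lt_compat; auto.
    apply pow_le; lra. }
  exists S. intros n z h Finv y A E Hn Hz Hmin HI HA HE.
  set (dd := ddf gamma h).
  set (b := fun j => (1 + dd j) ^ p).
  set (u := fun j => Rabs (y j)).
  set (a := fun i j => Cabs (A i j)).
  set (e := fun i j => / gamma * Rabs (dd i - dd j) ^ p).
  assert (Hdd : forall j, 0 <= dd j).
  { intros; unfold dd, ddf. pose proof PI_RGT_0. apply Rmult_le_pos. lra.
    apply Rmult_le_pos. apply Rmult_le_pos. lra. apply pow_le; lra. apply pow2_ge_0. }
  assert (Hgi : 0 < / gamma) by (apply Rinv_0_lt_compat; auto).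
  assert (Hschur : Rsum n (fun i => Rsum n (fun j => a i j * u j) * Rsum n (fun j => a i j * u j)) <=
           S * S * Rsum n (fun j => (b j * u j) * (b j * u j))).
  { apply schur with (e := e).
    - auto.
    - intros; apply Cabs_nonneg.
    - intros; apply Rabs_pos.
    - intros; unfold b; apply pow_le; specialize (Hdd j); lra.
    - intros; unfold e; apply Rmult_le_pos; [lra|apply pow_le, Rabs_pos].
    - intros eps Heps.
      assert (Hconv : forall k, (k < n)%nat ->
         Un_cv (fun N => fst (Pk d cv z n N k)) (fst (v (latpt z n k))) /\
         Un_cv (fun N => snd (Pk d cv z n N k)) (snd (v (latpt z n k)))).
      { intros k Hk. apply Hfs. rewrite latpt_length; auto. }
      destruct (conv_uniform (fun k => v (latpt z n k)) (fun N k => Pk d cv z n N k) n Hconv eps Heps)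
        as [N0 HN0].
      set (g := fun m => (1 + 2 * normsqZ m) ^ p).
      exists (fun i j => / gamma * c0 ^ p * Rsum_list (fun m => Cabs (cv m) * g m * aind z n m i j) (box d N0)).
      assert (Hind0 : forall m i j, 0 <= aind z n m i j) by (intros; destruct (ind_01 z n m i j) as [E1|E1]; rewrite E1; lra).
      assert (Hg0 : forall m, 0 <= g m) by (intros; unfold g; apply pow_le; pose proof (normsqZ_nonneg m); lra).
      assert (Hpre : 0 <= / gamma * c0 ^ p) by (apply Rmult_le_pos; [lra|apply pow_le; lra]).
      split; [|split; [|split]].
      + intros i j _ _. apply Rmult_le_pos; auto. apply Rsum_list_nonneg; intros.
        apply Rmult_le_pos; auto. apply Rmult_le_pos; auto. apply Cabs_nonneg.
      + intros i Hi. unfold S. rewrite Rsum_scal. apply Rmult_le_compat_l; auto.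
        unfold Rsum. rewrite <- Rsum_list_swap.
        eapply Rle_trans; [|apply (HS0b N0)]. apply Rsum_list_le; intros m _.
        rewrite Rsum_list_scal. fold (Rsum n (fun j => aind z n m i j)).
        pose proof (ind_sum_j z n m i Hn). pose proof (Cabs_nonneg (cv m)). specialize (Hg0 m).
        apply Rle_trans with (Cabs (cv m) * g m * 1). apply Rmult_le_compat_l; auto.
        apply Rmult_le_pos; auto. unfold g; lra.
      + intros j Hj. unfold S. rewrite Rsum_scal. apply Rmult_le_compat_l; auto.
        unfold Rsum. rewrite <- Rsum_list_swap.
        eapply Rle_trans; [|apply (HS0b N0)]. apply Rsum_list_le; intros m _.
        rewrite Rsum_list_scal. fold (Rsum n (fun i => aind z n m i j)).
        pose proof (ind_sum_i z n m j Hn). pose proof (Cabs_nonneg (cv m)). specialize (Hg0 m).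
        apply Rle_trans with (Cabs (cv m) * g m * 1). apply Rmult_le_compat_l; auto.
        apply Rmult_le_pos; auto. unfold g; lra.
      + intros i j Hi Hj. unfold a. rewrite HA by auto. fold dd.
        assert (HF : Cabs (FVG v z n i j) <= Rsum_list (fun m => Cabs (cv m) * aind z n m i j) (box d N0) + eps).
        { eapply Rle_trans. apply (FVG_WN d cv v z n N0 i j Hn). apply Rplus_le_compat.
          apply WN_bound; auto.
          assert (HnR : 0 < INR n) by (apply lt_0_INR; auto).
          apply Rle_trans with (/ INR n * (INR n * eps)).
          apply Rmult_le_compat_l. left; apply Rinv_0_lt_compat; auto.
          apply Rsum_one_le_max. intros k Hk. apply HN0; auto.
          right; field; lra. }
        set (D := Rabs (dd i - dd j) ^ p).
        assert (HD : 0 <= D) by (apply pow_le, Rabs_pos).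
        assert (Hkey : D * Rsum_list (fun m => Cabs (cv m) * aind z n m i j) (box d N0) <=
                c0 ^ p * Rsum_list (fun m => Cabs (cv m) * g m * aind z n m i j) (box d N0) * b j).
        { rewrite <- Rsum_list_scal.
          replace (c0 ^ p * Rsum_list (fun m => Cabs (cv m) * g m * aind z n m i j) (box d N0) * b j)
            with (Rsum_list (fun m => c0 ^ p * b j * (Cabs (cv m) * g m * aind z n m i j)) (box d N0))
            by (rewrite Rsum_list_scal; ring).
          apply Rsum_list_le; intros m Hm. apply box_length in Hm.
          destruct (ind_01 z n m i j) as [E1|E1]; rewrite E1.
          - right; ring.
          - pose proof (dd_bound gamma d z n h m i j Hg Hn Hmin Hi Hj Hm Hz E1) as Hb. fold dd in Hb.
            assert (D <= c0 ^ p * b j * g m).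
            { unfold D, b, g. rewrite <- !Rpow_mult_distr. apply pow_incr. split. apply Rabs_pos.
              fold c0 in Hb. exact Hb. }
            pose proof (Cabs_nonneg (cv m)). nra. }
        unfold e. fold D.
        apply Rle_trans with (/ gamma * (D * Rsum_list (fun m => Cabs (cv m) * aind z n m i j) (box d N0)) + eps * (/ gamma * D)).
        * replace (D * / gamma * Cabs (FVG v z n i j)) with (/ gamma * D * Cabs (FVG v z n i j)) by ring.
          apply Rle_trans with (/ gamma * D * (Rsum_list (fun m => Cabs (cv m) * aind z n m i j) (box d N0) + eps)).
          apply Rmult_le_compat_l; auto. apply Rmult_le_pos; lra. right; ring.
        * apply Rplus_le_compat_r. 
          apply Rle_trans with (/ gamma * (c0 ^ p * Rsum_list (fun m => Cabs (cv m) * g m * aind z n m i j) (box d N0) * b j)).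
          apply Rmult_le_compat_l; auto. lra. right; ring. }
  unfold vnorm.
  rewrite <- (sqrt_square S) by auto. rewrite <- sqrt_mult_alt by nra.
  apply sqrt_le_1_alt.
  eapply Rle_trans.
  - apply Rsum_le_lt with (g := fun i => Rsum n (fun j => a i j * u j) * Rsum n (fun j => a i j * u j)).
    intros i Hi. rewrite <- Cabs_sq. unfold mvec.
    assert (Hrow : Cabs (Csum n (fun k => Cmul (A i k) (realvec y k))) <= Rsum n (fun j => a i j * u j)).
    { eapply Rle_trans. apply Cabs_Csum_list. apply Rsum_list_le; intros.
      rewrite Cabs_mul. unfold realvec. rewrite Cabs_RtoC. right; reflexivity. }
    pose proof (Cabs_nonneg (Csum n (fun k => Cmul (A i k) (realvec y k)))).
    apply Rmult_le_compat; auto.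
  - eapply Rle_trans. apply Hschur. apply Rmult_le_compat_l. nra.
    right. apply Rsum_ext_lt. intros j Hj.
    rewrite (mvec_diag n E b (realvec y) j Hj). unfold Cmod2, Cmul, RtoC, realvec, u; simpl.
    assert (Rabs (y j) * Rabs (y j) = y j * y j) by (rewrite <- Rabs_mult; apply Rabs_pos_eq; nra).
    nra.
    intros k Hk. rewrite HE; auto.
Qed.

Theorem mainTheorem4 :
  forall (d : nat) (gamma alpha beta : R)
         (cv : list Z -> Cpx) (v : list R -> Cpx) (cg : list Z -> Cpx),
    0 < gamma ->
    korobov d alpha cv ->
    (forall x : list R, length x = d -> fourier_series_at d cv x (v x)) ->
    2 <= beta -> korobov d beta cg ->
    (5/2 < alpha ->
      exists c1 : R,
        forall (n : nat) (z : list Z) (h : nat -> list Z) (Finv : mat) (y : nat -> R),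
          (0 < n)%nat -> length z = d -> coprime_gen z n ->
          minimal_aa_set d z n h ->
          is_inverse n (Fmat n) Finv ->
          let D := mscale (gamma / 2) (Dnmat h) in
          let W := mscale (/ gamma) (mmul n (mmul n (Fmat n) (Vmat v z n)) Finv) in
          vnorm n (mvec n (comm n D W) (realvec y))
            <= c1 * vnorm n (mvec n (madd D idm) (realvec y))) /\
    (9/2 < alpha ->
      exists c2 : R,
        forall (n : nat) (z : list Z) (h : nat -> list Z) (Finv : mat) (y : nat -> R),
          (0 < n)%nat -> length z = d -> coprime_gen z n ->
          minimal_aa_set d z n h ->
          is_inverse n (Fmat n) Finv ->
          let D := mscale (gamma / 2) (Dnmat h) in
          let W := mscale (/ gamma) (mmul n (mmul n (Fmat n) (Vmat v z n)) Finv) in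
          vnorm n (mvec n (comm n D (comm n D W)) (realvec y))
            <= c2 * vnorm n (mvec n (mmul n (madd D idm) (madd D idm)) (realvec y))).
Proof.
  intros d gamma alpha beta cv v cg Hg Hkor Hfs _ _.
  assert (HDd : forall h, isdiag (mscale (gamma / 2) (Dnmat h)) (ddf gamma h)).
  { intros h. apply (mscale_diagm (gamma / 2) (fun i => 4 * PI ^ 2 * norm2Z (h i) ^ 2)). }
  assert (HW : forall n z Finv i j, (0 < n)%nat -> is_inverse n (Fmat n) Finv ->
     (i < n)%nat -> (j < n)%nat ->
     Cabs (mscale (/ gamma) (mmul n (mmul n (Fmat n) (Vmat v z n)) Finv) i j) =
     / gamma * Cabs (FVG v z n i j)).
  { intros n z Finv i j Hn HI Hi Hj. unfold mscale. rewrite Cabs_mul, Cabs_RtoC.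
    rewrite W_entry by auto. rewrite Rabs_pos_eq; auto. left; apply Rinv_0_lt_compat; auto. }
  split.
  - intros Ha. destruct (main_gen 1 d gamma alpha cv v Hg Hkor Hfs) as [c Hc].
    { replace (INR (2 * (2 * 1))) with 4 by (simpl; ring). lra. }
    exists c. intros n z h Finv y Hn Hz _ Hmin HI D W.
    apply (Hc n z h Finv y); auto.
    + intros i j Hi Hj. unfold D, W. rewrite (comm_diag n _ (ddf gamma h)) by auto.
      rewrite Cabs_mul, Cabs_RtoC, HW by auto. ring.
    + intros i j Hi Hj. unfold D. rewrite (madd_idm _ _ (HDd h)).
      destruct (Nat.eqb i j); auto. f_equal; ring.
  - intros Ha. destruct (main_gen 2 d gamma alpha cv v Hg Hkor Hfs) as [c Hc].
    { replace (INR (2 * (2 * 2))) with 8 by (simpl; ring). lra. }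
    exists c. intros n z h Finv y Hn Hz _ Hmin HI D W.
    apply (Hc n z h Finv y); auto.
    + intros i j Hi Hj. unfold D, W. rewrite (comm_diag n _ (ddf gamma h)) by auto.
      rewrite Cabs_mul, Cabs_RtoC. rewrite (comm_diag n _ (ddf gamma h)) by auto.
      rewrite Cabs_mul, Cabs_RtoC, HW by auto. ring.
    + intros i j Hi Hj. unfold D. rewrite (mmul_diag_l n _ _ _ i j (madd_idm _ _ (HDd h))) by auto.
      rewrite (madd_idm _ _ (HDd h)).
      destruct (Nat.eqb i j); apply Cpx_ext; unfold Cmul, RtoC, C0; simpl; ring.
Qed.
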